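(* If $X$ is a Cayley graph on a finite abelian group with $X\cong K_3\,\square\,K_3\,\square\,K_2$, then $\mathcal H(X)=\mathcal E(X)$.
   Context: $\square$ denotes the Cartesian product of graphs; $K_n$ is the complete graph on $n$ vertices. For a Cayley graph $X=\mathrm{Cay}(G;S)$ (vertex set $G$, edges $\{g,gs\}$), a flow is $f:G\times S\to\mathbb Z$ with $f(v,s)=-f(vs,s^{-1})$ and $\sum_sf(v,s)=0$; $\mathcal E(X)$ is the group of flows whose edge-flows (one orientation per edge) have even sum; oriented cycles are identified with flows ($1$ on their oriented edges, $-1$ on reversals); $\mathcal H(X)$ is the subgroup generated by oriented hamiltonian cycles. *)

(* Defs.v *)
From HB Require Import structures.
From mathcomp Require Import all_boot all_order all_algebra all_fingroup.
Set Implicit Arguments. Unset Strict Implicit. Unset Printing Implicit Defensive.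
Import GRing.Theory Num.Theory.
Local Open Scope ring_scope.

Definition Kn (n : nat) : rel 'I_n := fun i j => i != j.
Arguments Kn n : clear implicits.

Definition boxrel (T1 T2 : eqType) (e1 : rel T1) (e2 : rel T2) : rel (T1 * T2) :=
  fun x y => (e1 x.1 y.1 && (x.2 == y.2)) || ((x.1 == y.1) && e2 x.2 y.2).

Definition graph_iso (T1 T2 : finType) (e1 : rel T1) (e2 : rel T2) : Prop :=
  exists phi : T1 -> T2, bijective phi /\ forall x y, e1 x y = e2 (phi x) (phi y).

Section Cayley.
Variables (gT : finGroupType) (S : {set gT}).

Definition cay_adj : rel gT := fun x y => (x^-1 * y)%g \in S.

(* Functions G x S -> Z, represented on gT * gT and extended by 0 off S. *)
Definition flowfun := {ffun gT * gT -> int}.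

Definition is_flow (f : flowfun) : Prop :=
  [/\ forall v s, s \notin S -> f (v, s) = 0,
      forall v s, s \in S -> f (v, s) = - f ((v * s)%g, (s^-1)%g) &
      forall v, \sum_(s in S) f (v, s) = 0].

(* Sum of the edge-flows, each edge {v, v s} oriented from the endpoint
   of smaller enum_rank to the one of larger enum_rank. *)
Definition edge_flow_sum (f : flowfun) : int :=
  \sum_(v : gT) \sum_(s in S | (enum_rank v < enum_rank (v * s)%g)%N) f (v, s).

Definition in_E (f : flowfun) : Prop := is_flow f /\ (2 %| edge_flow_sum f)%Z.

(* The flow of the oriented cycle given by the cyclic vertex sequence c:
   1 on its oriented edges, -1 on their reversals, 0 elsewhere. *)
Definition cycle_flow (c : seq gT) : flowfun :=
  [ffun p : gT * gT =>
     if p.2 \in S then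
       (nat_of_bool ((p.1 \in c) && (next c p.1 == (p.1 * p.2)%g)))%:Z
     - (nat_of_bool (((p.1 * p.2)%g \in c) && (next c (p.1 * p.2)%g == p.1)))%:Z
     else 0].

Definition ham_cycle (c : seq gT) : Prop :=
  [/\ uniq c, size c = #|gT| & path.cycle cay_adj c].

Definition in_H (f : flowfun) : Prop :=
  exists l : seq (int * seq gT),
    (forall p, p \in l -> ham_cycle p.2) /\
    f = \sum_(p <- l) (cycle_flow p.2) *~ p.1.

End Cayley.

(* Main.v *)
Require Import Defs.
From HB Require Import structures.
From mathcomp Require Import all_boot all_order all_algebra all_fingroup.
From mathcomp Require Import zify.
Set Implicit Arguments. Unset Strict Implicit. Unset Printing Implicit Defensive.
Import GRing.Theory Num.Theory.
Local Open Scope ring_scope.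


Lemma swap_sum (T : finType) (P : T -> T -> bool) (F : T -> T -> int) :
  \sum_(v : T) \sum_(w : T | P v w) F v w = \sum_(v : T) \sum_(w : T | P w v) F w v.
Proof. by rewrite (exchange_big_dep xpredT) //=. Qed.

Lemma split_rank (T : finType) (adj : rel T) (r : T -> nat) (Q : T -> T -> bool)
  (F : T -> T -> int) :
  (forall v, ~~ adj v v) -> injective r ->
  \sum_(v : T) \sum_(w : T | adj v w && Q v w) F v w =
  \sum_(v : T) \sum_(w : T | [&& adj v w, Q v w & (r v < r w)%N]) F v w +
  \sum_(v : T) \sum_(w : T | [&& adj v w, Q v w & (r w < r v)%N]) F v w.
Proof.
move=> irr rinj; rewrite -big_split /=; apply: eq_bigr => v _.
rewrite (bigID (fun w => (r v < r w)%N)) /=; congr (_ + _); apply: eq_bigl => w.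
  by rewrite andbA.
case A: (adj v w) => //=; case: (Q v w) => //=.
have neq : r w != r v.
  apply/eqP => /rinj e; move: (irr v); by rewrite -{2}e A.
by rewrite -leqNgt leq_eqVlt (negbTE neq).
Qed.

Lemma par_change (T : finType) (adj : rel T) (F : T -> T -> int) (r1 r2 : T -> nat) :
  (forall v w, adj v w -> adj w v) -> (forall v, ~~ adj v v) ->
  (forall v w, adj v w -> F w v = - F v w) -> injective r1 -> injective r2 ->
  exists B, \sum_(v : T) \sum_(w : T | adj v w && (r1 v < r1 w)%N) F v w =
  \sum_(v : T) \sum_(w : T | adj v w && (r2 v < r2 w)%N) F v w + 2 * B.
Proof.
move=> sym irr anti i1 i2.
rewrite (@split_rank _ adj r2 (fun v w => (r1 v < r1 w)%N) F irr i2).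
rewrite (@split_rank _ adj r1 (fun v w => (r2 v < r2 w)%N) F irr i1).
set B := \sum_v \sum_(w | [&& adj v w, (r1 v < r1 w)%N & (r2 w < r2 v)%N]) F v w.
exists B.
have E1 : \sum_v \sum_(w | [&& adj v w, (r2 v < r2 w)%N & (r1 v < r1 w)%N]) F v w =
  \sum_v \sum_(w | [&& adj v w, (r1 v < r1 w)%N & (r2 v < r2 w)%N]) F v w.
  by apply: eq_bigr => v _; apply: eq_bigl => w; case: (adj v w); rewrite //= andbC.
have E2 : \sum_v \sum_(w | [&& adj v w, (r2 v < r2 w)%N & (r1 w < r1 v)%N]) F v w = - B.
  rewrite swap_sum /B -sumrN; apply: eq_bigr => v _; rewrite -sumrN.
  apply: eq_big => w.
    by case A: (adj v w); case B1: (adj w v) => //=; [rewrite andbC | move: (sym _ _ A); rewrite B1 | move: (sym _ _ B1); rewrite A].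
  by case/andP => A _; rewrite (anti _ _ A) opprK.
rewrite E1 E2; lia.
Qed.


Lemma pairform (gT : finGroupType) (S : {set gT}) (v : gT) (P : gT -> bool) (h : gT -> int) :
  \sum_(s in S | P (v * s)%g) h s = \sum_(w | cay_adj S v w && P w) h (v^-1 * w)%g.
Proof.
rewrite [RHS](reindex_inj (mulgI v)) /=; apply: eq_big => s; by rewrite /cay_adj mulKg.
Qed.

Lemma cay_sym (gT : finGroupType) (S : {set gT}) :
  (forall s, s \in S -> s^-1 \in S)%g -> forall v w, cay_adj S v w -> cay_adj S w v.
Proof. by move=> hinv v w; rewrite /cay_adj => /hinv; rewrite invMg invgK. Qed.

Lemma cay_irr (gT : finGroupType) (S : {set gT}) :
  (1 \notin S)%g -> forall v, ~~ cay_adj S v v.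
Proof. by move=> h1 v; rewrite /cay_adj mulVg. Qed.

Lemma ham_mem (gT : finGroupType) (S : {set gT}) c : ham_cycle S c -> forall x, x \in c.
Proof.
case=> uc sc _ x; apply/negPn/negP => xn.
have := cardC (mem c); rewrite (card_uniqP uc) sc => /eqP.
rewrite -[X in _ == X]addn0 eqn_add2l => /eqP/card0_eq/(_ x).
by rewrite !inE xn.
Qed.

Lemma sum_ind (gT : finGroupType) (S : {set gT}) (P : gT -> bool) s0 :
  s0 \in S -> (forall s, P s = (s == s0)) -> \sum_(s in S) (P s : nat)%:Z = 1.
Proof.
move=> s0S hP; rewrite (bigD1 s0) //= hP eqxx big1 ?addr0 // => s /andP[_ ne].
by rewrite hP (negbTE ne).
Qed.

Lemma eq_mulV (gT : finGroupType) (x v s : gT) : (x == v * s)%g = (s == v^-1 * x)%g.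
Proof. by rewrite eq_sym; apply/eqP/eqP => [<-|->]; rewrite ?mulKg ?mulKVg. Qed.

Lemma hamflow (gT : finGroupType) (S : {set gT}) c :
  (forall s, s \in S -> s^-1 \in S)%g -> ham_cycle S c -> is_flow S (cycle_flow S c).
Proof.
move=> hinv hc; have mc := ham_mem hc; case: hc => uc sc cc.
split.
- by move=> v s sS; rewrite ffunE /= (negbTE sS).
- by move=> v s sS; rewrite !ffunE /= sS hinv // mulgK opprB.
move=> v.
rewrite (eq_bigr (fun s => ((v \in c) && (next c v == v * s)%g : nat)%:Z -
   (((v * s)%g \in c) && (next c (v * s)%g == v) : nat)%:Z)); last first.
  by move=> s sS; rewrite ffunE /= sS.
rewrite sumrB (@sum_ind _ _ _ (v^-1 * next c v)%g); first last.
- by move=> s; rewrite mc eq_mulV.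
- by have := next_cycle cc (mc v).
rewrite (@sum_ind _ _ _ (v^-1 * prev c v)%g) ?subrr //; first last.
- move=> s; rewrite mc /=; rewrite -eq_mulV.
  apply/eqP/eqP => h; first by rewrite -[in prev c v]h prev_next.
  by rewrite -h next_prev.
- by have := prev_cycle cc (mc v); rewrite /cay_adj => /hinv; rewrite invMg invgK.
Qed.

Lemma hampar (gT : finGroupType) (S : {set gT}) c :
  (forall s, s \in S -> s^-1 \in S)%g -> (1 \notin S)%g -> ham_cycle S c ->
  exists X, edge_flow_sum S (cycle_flow S c) = 2 * X - #|gT|%:Z.
Proof.
move=> hinv h1 hc; have mc := ham_mem hc; case: hc => uc sc cc.
pose r := fun v : gT => nat_of_ord (enum_rank v).
have ri : injective r by move=> x y /val_inj/enum_rank_inj.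
pose A := fun v w : gT => ((next c v == w) : nat)%:Z.
have E1 : edge_flow_sum S (cycle_flow S c) =
  \sum_v \sum_(w | cay_adj S v w && (r v < r w)%N) (A v w - A w v).
  rewrite /edge_flow_sum; apply: eq_bigr => v _.
  rewrite (@pairform _ S v (fun w => (r v < r w)%N)); apply: eq_bigr => w /andP[vw _].
  by rewrite ffunE /= -/(cay_adj S v w) vw mulKVg !mc.
set X := \sum_v \sum_(w | cay_adj S v w && (r v < r w)%N) A v w.
set Y := \sum_v \sum_(w | cay_adj S v w && (r w < r v)%N) A v w.
have E2 : \sum_v \sum_(w | cay_adj S v w && (r v < r w)%N) A w v = Y.
  rewrite swap_sum; apply: eq_bigr => v _; apply: eq_bigl => w.
  by case A1: (cay_adj S w v); case A2 : (cay_adj S v w) => //=;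
    [move: (cay_sym hinv A1); rewrite A2 | move: (cay_sym hinv A2); rewrite A1].
have E3 : X + Y = #|gT|%:Z.
  have := @split_rank _ (cay_adj S) r (fun _ _ => true) A (cay_irr h1) ri.
  rewrite /X /Y /= => <-.
  rewrite -sum1_card -natz natr_sum; apply: eq_bigr => v _.
  rewrite (bigD1 (next c v)) /=; last by rewrite andbT; exact: next_cycle cc (mc v).
  rewrite /A eqxx big1 ?addr0 // => w /andP[_ /negbTE]; by rewrite eq_sym => ->.
exists X; rewrite E1.
rewrite (eq_bigr (fun v => \sum_(w | cay_adj S v w && (r v < r w)%N) A v w -
  \sum_(w | cay_adj S v w && (r v < r w)%N) A w v)); last by move=> v _; rewrite sumrB.
rewrite sumrB -/X E2; lia.
Qed.


Lemma ffunDE' (aT : finType) (f g : {ffun aT -> int}) x : (f + g) x = f x + g x.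
Proof. by rewrite ffunE. Qed.

Lemma ffun0E' (aT : finType) x : (0 : {ffun aT -> int}) x = 0.
Proof. by rewrite ffunE. Qed.

Lemma inE0 (gT : finGroupType) (S : {set gT}) : in_E S 0.
Proof.
split; first split.
- by move=> v s _; rewrite ffun0E'.
- by move=> v s _; rewrite !ffun0E' oppr0.
- by move=> v; rewrite big1 // => s _; rewrite ffun0E'.
rewrite /edge_flow_sum big1 ?dvdz0 // => v _; rewrite big1 // => s _; by rewrite ffun0E'.
Qed.

Lemma inED (gT : finGroupType) (S : {set gT}) f g : in_E S f -> in_E S g -> in_E S (f + g).
Proof.
move=> [[f1 f2 f3] fe] [[g1 g2 g3] ge]; split; first split.
- by move=> v s sS; rewrite ffunDE' f1 // g1 // addr0.
- by move=> v s sS; rewrite !ffunDE' f2 // g2 // opprD.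
- move=> v; rewrite (eq_bigr (fun s => f (v, s) + g (v, s))); last by move=> s _; rewrite ffunDE'.
  by rewrite big_split /= f3 g3 addr0.
have -> : edge_flow_sum S (f + g) = edge_flow_sum S f + edge_flow_sum S g.
  rewrite /edge_flow_sum -big_split; apply: eq_bigr => v _; rewrite -big_split.
  by apply: eq_bigr => s _; rewrite ffunDE'.
move/dvdzP: fe => [a ->]; move/dvdzP: ge => [b ->]; by apply/dvdzP; exists (a + b); rewrite mulrDl.
Qed.

Lemma inEZ (gT : finGroupType) (S : {set gT}) f z : in_E S f -> in_E S (f *~ z).
Proof.
move=> [[f1 f2 f3] fe]; split; first split.
- by move=> v s sS; rewrite ffunMzE f1 // mul0rz.
- by move=> v s sS; rewrite !ffunMzE f2 // mulNrz.
- move=> v; rewrite (eq_bigr (fun s => f (v, s) *~ z)); last by move=> s _; rewrite ffunMzE.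
  by rewrite -mulrz_suml f3 mul0rz.
have -> : edge_flow_sum S (f *~ z) = edge_flow_sum S f *~ z.
  rewrite /edge_flow_sum mulrz_suml; apply: eq_bigr => v _; rewrite mulrz_suml.
  by apply: eq_bigr => s _; rewrite ffunMzE.
move/dvdzP: fe => [a ->]; apply/dvdzP; exists (a * z); rewrite mulrzz; lia.
Qed.

Lemma HsubE (gT : finGroupType) (S : {set gT}) f :
  (forall s, s \in S -> s^-1 \in S)%g -> (1 \notin S)%g -> #|gT| = 18%N ->
  in_H S f -> in_E S f.
Proof.
move=> hinv h1 ev [l [hl ->]]; elim: l hl => [|p l IH] hl.
  by rewrite big_nil; exact: inE0.
rewrite big_cons; apply: inED; last by apply: IH => q ql; apply: hl; rewrite inE ql orbT.
apply: inEZ; have hp : ham_cycle S p.2 by apply: hl; rewrite inE eqxx.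
split; first exact: hamflow.
have [X ->] := hampar hinv h1 hp.
rewrite ev; apply/dvdzP; exists (X - 9); lia.
Qed.

Definition V := (('I_3 * 'I_3) * 'I_2)%type.
Definition E0 : rel V := boxrel (boxrel (Kn 3) (Kn 3)) (Kn 2).
Definition v0 : V := ((@Ordinal 3 0 isT, @Ordinal 3 0 isT), @Ordinal 2 0 isT).
Definition v1 : V := ((@Ordinal 3 0 isT, @Ordinal 3 0 isT), @Ordinal 2 1 isT).
Definition v2 : V := ((@Ordinal 3 0 isT, @Ordinal 3 1 isT), @Ordinal 2 0 isT).
Definition v3 : V := ((@Ordinal 3 0 isT, @Ordinal 3 1 isT), @Ordinal 2 1 isT).
Definition v4 : V := ((@Ordinal 3 0 isT, @Ordinal 3 2 isT), @Ordinal 2 0 isT).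
Definition v5 : V := ((@Ordinal 3 0 isT, @Ordinal 3 2 isT), @Ordinal 2 1 isT).
Definition v6 : V := ((@Ordinal 3 1 isT, @Ordinal 3 0 isT), @Ordinal 2 0 isT).
Definition v7 : V := ((@Ordinal 3 1 isT, @Ordinal 3 0 isT), @Ordinal 2 1 isT).
Definition v8 : V := ((@Ordinal 3 1 isT, @Ordinal 3 1 isT), @Ordinal 2 0 isT).
Definition v9 : V := ((@Ordinal 3 1 isT, @Ordinal 3 1 isT), @Ordinal 2 1 isT).
Definition v10 : V := ((@Ordinal 3 1 isT, @Ordinal 3 2 isT), @Ordinal 2 0 isT).
Definition v11 : V := ((@Ordinal 3 1 isT, @Ordinal 3 2 isT), @Ordinal 2 1 isT).
Definition v12 : V := ((@Ordinal 3 2 isT, @Ordinal 3 0 isT), @Ordinal 2 0 isT).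
Definition v13 : V := ((@Ordinal 3 2 isT, @Ordinal 3 0 isT), @Ordinal 2 1 isT).
Definition v14 : V := ((@Ordinal 3 2 isT, @Ordinal 3 1 isT), @Ordinal 2 0 isT).
Definition v15 : V := ((@Ordinal 3 2 isT, @Ordinal 3 1 isT), @Ordinal 2 1 isT).
Definition v16 : V := ((@Ordinal 3 2 isT, @Ordinal 3 2 isT), @Ordinal 2 0 isT).
Definition v17 : V := ((@Ordinal 3 2 isT, @Ordinal 3 2 isT), @Ordinal 2 1 isT).
Definition vlist : seq V := [:: v0; v1; v2; v3; v4; v5; v6; v7; v8; v9; v10; v11; v12; v13; v14; v15; v16; v17].
Lemma vlist_uniq : uniq vlist. Proof. by vm_compute. Qed.
Lemma mem_vlist x : x \in vlist.
Proof.
case: x => [[[a Ha] [b Hb]] [c Hc]].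
case: a Ha => [|[|[|a]]] Ha //; case: b Hb => [|[|[|b]]] Hb //; case: c Hc => [|[|c]] Hc //; by vm_compute.
Qed.

Definition hflow (c : seq V) (x y : V) : int := ((next c x == y) : nat)%:Z - ((next c y == x) : nat)%:Z.
Arguments hflow : simpl never.
Definition code (x : V) : nat := (6 * x.1.1 + 2 * x.1.2 + x.2)%N.
Definition hcs : seq (seq V) := [:: [:: v0; v4; v5; v11; v7; v6; v8; v10; v16; v12; v14; v2; v3; v9; v15; v17; v13; v1];
  [:: v0; v2; v8; v6; v7; v9; v11; v10; v16; v17; v15; v14; v12; v13; v1; v3; v5; v4];
  [:: v0; v1; v7; v13; v17; v15; v14; v2; v3; v5; v4; v16; v10; v11; v9; v8; v6; v12];
  [:: v0; v6; v12; v13; v7; v11; v10; v4; v5; v1; v3; v9; v15; v17; v16; v14; v8; v2];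
  [:: v0; v12; v14; v8; v6; v7; v1; v13; v15; v9; v3; v5; v11; v17; v16; v10; v4; v2];
  [:: v0; v4; v16; v14; v2; v3; v9; v11; v10; v8; v6; v7; v1; v5; v17; v15; v13; v12];
  [:: v0; v1; v7; v9; v15; v14; v12; v13; v17; v11; v10; v16; v4; v5; v3; v2; v8; v6];
  [:: v0; v12; v13; v7; v1; v5; v17; v16; v4; v2; v3; v15; v14; v8; v9; v11; v10; v6];
  [:: v0; v2; v14; v8; v10; v4; v5; v17; v16; v12; v6; v7; v11; v9; v3; v15; v13; v1];
  [:: v0; v1; v13; v15; v9; v3; v2; v8; v10; v11; v7; v6; v12; v14; v16; v17; v5; v4];
  [:: v0; v4; v10; v16; v12; v14; v8; v2; v3; v9; v15; v13; v17; v11; v5; v1; v7; v6];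
  [:: v0; v4; v16; v14; v2; v3; v1; v7; v11; v5; v17; v13; v15; v9; v8; v10; v6; v12];
  [:: v0; v1; v13; v15; v14; v12; v6; v8; v2; v3; v9; v7; v11; v5; v17; v16; v10; v4];
  [:: v0; v12; v16; v10; v6; v8; v2; v14; v15; v13; v1; v3; v9; v7; v11; v17; v5; v4];
  [:: v0; v1; v5; v3; v15; v17; v13; v12; v16; v14; v8; v6; v7; v9; v11; v10; v4; v2];
  [:: v0; v1; v3; v5; v4; v16; v14; v15; v9; v7; v11; v17; v13; v12; v6; v10; v8; v2];
  [:: v0; v6; v10; v4; v5; v1; v3; v15; v17; v13; v7; v11; v9; v8; v2; v14; v16; v12];
  [:: v0; v4; v5; v17; v16; v14; v8; v9; v15; v13; v12; v6; v10; v11; v7; v1; v3; v2];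
  [:: v0; v12; v14; v16; v4; v10; v6; v8; v2; v3; v9; v7; v11; v5; v17; v15; v13; v1];
  [:: v0; v12; v14; v2; v3; v9; v11; v5; v1; v7; v13; v15; v17; v16; v4; v10; v8; v6];
  [:: v0; v4; v5; v1; v3; v9; v15; v14; v12; v16; v17; v13; v7; v11; v10; v6; v8; v2];
  [:: v0; v1; v7; v13; v15; v3; v2; v4; v10; v8; v9; v11; v5; v17; v16; v14; v12; v6];
  [:: v0; v2; v14; v12; v6; v7; v13; v17; v11; v5; v1; v3; v15; v9; v8; v10; v16; v4];
  [:: v0; v6; v12; v16; v14; v8; v9; v11; v10; v4; v5; v1; v7; v13; v17; v15; v3; v2];
  [:: v0; v4; v5; v17; v15; v13; v7; v6; v12; v16; v14; v2; v8; v10; v11; v9; v3; v1];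
  [:: v0; v2; v3; v9; v7; v1; v13; v15; v14; v16; v17; v11; v5; v4; v10; v8; v6; v12];
  [:: v0; v6; v8; v10; v4; v16; v12; v13; v7; v1; v5; v17; v11; v9; v3; v15; v14; v2];
  [:: v0; v2; v3; v1; v13; v12; v6; v8; v9; v7; v11; v5; v17; v15; v14; v16; v10; v4];
  [:: v0; v1; v5; v11; v10; v8; v2; v14; v12; v6; v7; v9; v3; v15; v13; v17; v16; v4];
  [:: v0; v6; v7; v9; v8; v10; v11; v5; v4; v2; v3; v1; v13; v17; v15; v14; v16; v12];
  [:: v0; v6; v12; v13; v15; v9; v7; v1; v3; v5; v11; v17; v16; v10; v8; v14; v2; v4];
  [:: v0; v2; v4; v10; v11; v17; v13; v12; v16; v14; v15; v3; v5; v1; v7; v9; v8; v6];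
  [:: v0; v2; v3; v5; v1; v7; v11; v17; v13; v15; v9; v8; v14; v12; v6; v10; v16; v4];
  [:: v0; v2; v4; v5; v11; v7; v1; v13; v17; v16; v14; v15; v3; v9; v8; v10; v6; v12];
  [:: v0; v12; v14; v15; v17; v16; v10; v4; v5; v11; v9; v7; v13; v1; v3; v2; v8; v6];
  [:: v0; v1; v5; v3; v9; v15; v13; v12; v6; v7; v11; v17; v16; v14; v8; v10; v4; v2];
  [:: v0; v1; v7; v11; v17; v16; v4; v5; v3; v2; v14; v12; v13; v15; v9; v8; v10; v6];
  [:: v0; v2; v4; v16; v12; v14; v15; v13; v7; v6; v10; v8; v9; v11; v17; v5; v3; v1];
  [:: v0; v6; v7; v11; v10; v8; v9; v15; v3; v2; v14; v12; v16; v4; v5; v17; v13; v1];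
  [:: v0; v1; v13; v15; v9; v3; v2; v14; v8; v6; v7; v11; v10; v4; v5; v17; v16; v12];
  [:: v0; v1; v5; v17; v15; v3; v2; v8; v6; v10; v11; v9; v7; v13; v12; v14; v16; v4];
  [:: v0; v6; v8; v9; v3; v5; v11; v10; v4; v2; v14; v15; v17; v16; v12; v13; v7; v1];
  [:: v0; v1; v5; v17; v15; v3; v2; v14; v8; v9; v11; v10; v4; v16; v12; v13; v7; v6];
  [:: v0; v2; v8; v10; v16; v4; v5; v11; v17; v13; v7; v6; v12; v14; v15; v9; v3; v1];
  [:: v0; v12; v16; v4; v10; v6; v8; v9; v11; v7; v13; v17; v15; v14; v2; v3; v5; v1];
  [:: v0; v1; v5; v17; v16; v10; v6; v12; v14; v8; v9; v11; v7; v13; v15; v3; v2; v4];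
  [:: v0; v12; v6; v10; v4; v5; v3; v9; v11; v7; v1; v13; v15; v17; v16; v14; v8; v2];
  [:: v0; v6; v7; v1; v5; v3; v2; v8; v10; v11; v9; v15; v17; v13; v12; v14; v16; v4];
  [:: v0; v12; v16; v4; v10; v11; v5; v1; v7; v13; v17; v15; v9; v3; v2; v14; v8; v6];
  [:: v0; v4; v16; v17; v13; v7; v1; v5; v3; v15; v14; v2; v8; v9; v11; v10; v6; v12];
  [:: v0; v4; v2; v3; v15; v17; v13; v1; v5; v11; v9; v7; v6; v8; v10; v16; v14; v12];
  [:: v0; v2; v14; v12; v16; v17; v15; v9; v11; v7; v13; v1; v3; v5; v4; v10; v8; v6];
  [:: v0; v4; v10; v11; v9; v15; v17; v16; v12; v13; v7; v6; v8; v14; v2; v3; v5; v1];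
  [:: v0; v1; v3; v9; v8; v6; v12; v16; v10; v4; v5; v11; v7; v13; v17; v15; v14; v2];
  [:: v0; v1; v13; v17; v16; v12; v6; v7; v9; v11; v10; v4; v5; v3; v15; v14; v8; v2];
  [:: v0; v6; v7; v11; v9; v8; v14; v16; v10; v4; v2; v3; v1; v5; v17; v15; v13; v12];
  [:: v0; v2; v8; v14; v12; v6; v10; v11; v9; v15; v13; v7; v1; v3; v5; v17; v16; v4];
  [:: v0; v4; v5; v3; v2; v14; v15; v9; v7; v11; v17; v16; v10; v8; v6; v12; v13; v1];
  [:: v0; v1; v7; v9; v3; v2; v14; v16; v17; v15; v13; v12; v6; v8; v10; v11; v5; v4];
  [:: v0; v6; v12; v14; v15; v9; v3; v1; v5; v4; v16; v17; v13; v7; v11; v10; v8; v2];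
  [:: v0; v2; v4; v5; v3; v1; v7; v9; v15; v13; v17; v11; v10; v16; v14; v8; v6; v12];
  [:: v0; v1; v13; v7; v6; v10; v4; v2; v14; v8; v9; v15; v3; v5; v11; v17; v16; v12];
  [:: v0; v1; v5; v11; v17; v13; v7; v9; v3; v15; v14; v12; v6; v8; v10; v16; v4; v2];
  [:: v0; v2; v3; v5; v11; v7; v9; v8; v14; v15; v17; v16; v4; v10; v6; v12; v13; v1];
  [:: v0; v1; v7; v6; v8; v2; v4; v10; v11; v5; v3; v9; v15; v14; v16; v17; v13; v12]].
Definition hrow (x y : V) : seq int := [seq hflow c x y | c <- hcs].
Arguments hrow : simpl never.
Definition elist : seq (V * V) := [seq (x, y) | x <- vlist, y <- [seq y <- vlist | E0 x y && (code x < code y)%N]].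
Lemma elist_eq : elist = [:: (v0, v1); (v0, v2); (v0, v4); (v0, v6); (v0, v12); (v1, v3); (v1, v5); (v1, v7); (v1, v13); (v2, v3); (v2, v4); (v2, v8); (v2, v14); (v3, v5); (v3, v9); (v3, v15); (v4, v5); (v4, v10); (v4, v16); (v5, v11); (v5, v17); (v6, v7); (v6, v8); (v6, v10); (v6, v12); (v7, v9); (v7, v11); (v7, v13); (v8, v9); (v8, v10); (v8, v14); (v9, v11); (v9, v15); (v10, v11); (v10, v16); (v11, v17); (v12, v13); (v12, v14); (v12, v16); (v13, v15); (v13, v17); (v14, v15); (v14, v16); (v15, v17); (v16, v17)].
Proof. by vm_compute. Qed.
Lemma hcs_ok : all (fun c => [&& uniq c, size c == 18%N & path.cycle E0 c]) hcs.
Proof. by vm_compute. Qed.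

Lemma concrete (G : V -> V -> int) :
  (forall x y, E0 x y -> G y x = - G x y) ->
  (forall x, \sum_(y <- vlist | E0 x y) G x y = 0) ->
  (2 %| \sum_(p <- elist) G p.1 p.2)%Z ->
  exists cf : seq int, forall p, p \in elist -> G p.1 p.2 = \sum_(q <- zip cf (hrow p.1 p.2)) q.1 * q.2.
Proof.
move=> Ganti Gcons Gpar.
have C0 := Gcons v0.
rewrite -big_filter (_ : [seq y <- vlist | E0 v0 y] = [:: v1; v2; v4; v6; v12]) in C0; last by vm_compute.
rewrite !big_cons big_nil in C0.
have C1 := Gcons v1.
rewrite -big_filter (_ : [seq y <- vlist | E0 v1 y] = [:: v0; v3; v5; v7; v13]) in C1; last by vm_compute.
rewrite !big_cons big_nil in C1.
rewrite (Ganti v0 v1 isT) in C1.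
have C2 := Gcons v2.
rewrite -big_filter (_ : [seq y <- vlist | E0 v2 y] = [:: v0; v3; v4; v8; v14]) in C2; last by vm_compute.
rewrite !big_cons big_nil in C2.
rewrite (Ganti v0 v2 isT) in C2.
have C3 := Gcons v3.
rewrite -big_filter (_ : [seq y <- vlist | E0 v3 y] = [:: v1; v2; v5; v9; v15]) in C3; last by vm_compute.
rewrite !big_cons big_nil in C3.
rewrite (Ganti v1 v3 isT) in C3.
rewrite (Ganti v2 v3 isT) in C3.
have C4 := Gcons v4.
rewrite -big_filter (_ : [seq y <- vlist | E0 v4 y] = [:: v0; v2; v5; v10; v16]) in C4; last by vm_compute.
rewrite !big_cons big_nil in C4.
rewrite (Ganti v0 v4 isT) in C4.
rewrite (Ganti v2 v4 isT) in C4.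
have C5 := Gcons v5.
rewrite -big_filter (_ : [seq y <- vlist | E0 v5 y] = [:: v1; v3; v4; v11; v17]) in C5; last by vm_compute.
rewrite !big_cons big_nil in C5.
rewrite (Ganti v1 v5 isT) in C5.
rewrite (Ganti v3 v5 isT) in C5.
rewrite (Ganti v4 v5 isT) in C5.
have C6 := Gcons v6.
rewrite -big_filter (_ : [seq y <- vlist | E0 v6 y] = [:: v0; v7; v8; v10; v12]) in C6; last by vm_compute.
rewrite !big_cons big_nil in C6.
rewrite (Ganti v0 v6 isT) in C6.
have C7 := Gcons v7.
rewrite -big_filter (_ : [seq y <- vlist | E0 v7 y] = [:: v1; v6; v9; v11; v13]) in C7; last by vm_compute.
rewrite !big_cons big_nil in C7.
rewrite (Ganti v1 v7 isT) in C7.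
rewrite (Ganti v6 v7 isT) in C7.
have C8 := Gcons v8.
rewrite -big_filter (_ : [seq y <- vlist | E0 v8 y] = [:: v2; v6; v9; v10; v14]) in C8; last by vm_compute.
rewrite !big_cons big_nil in C8.
rewrite (Ganti v2 v8 isT) in C8.
rewrite (Ganti v6 v8 isT) in C8.
have C9 := Gcons v9.
rewrite -big_filter (_ : [seq y <- vlist | E0 v9 y] = [:: v3; v7; v8; v11; v15]) in C9; last by vm_compute.
rewrite !big_cons big_nil in C9.
rewrite (Ganti v3 v9 isT) in C9.
rewrite (Ganti v7 v9 isT) in C9.
rewrite (Ganti v8 v9 isT) in C9.
have C10 := Gcons v10.
rewrite -big_filter (_ : [seq y <- vlist | E0 v10 y] = [:: v4; v6; v8; v11; v16]) in C10; last by vm_compute.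
rewrite !big_cons big_nil in C10.
rewrite (Ganti v4 v10 isT) in C10.
rewrite (Ganti v6 v10 isT) in C10.
rewrite (Ganti v8 v10 isT) in C10.
have C11 := Gcons v11.
rewrite -big_filter (_ : [seq y <- vlist | E0 v11 y] = [:: v5; v7; v9; v10; v17]) in C11; last by vm_compute.
rewrite !big_cons big_nil in C11.
rewrite (Ganti v5 v11 isT) in C11.
rewrite (Ganti v7 v11 isT) in C11.
rewrite (Ganti v9 v11 isT) in C11.
rewrite (Ganti v10 v11 isT) in C11.
have C12 := Gcons v12.
rewrite -big_filter (_ : [seq y <- vlist | E0 v12 y] = [:: v0; v6; v13; v14; v16]) in C12; last by vm_compute.
rewrite !big_cons big_nil in C12.
rewrite (Ganti v0 v12 isT) in C12.
rewrite (Ganti v6 v12 isT) in C12.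
have C13 := Gcons v13.
rewrite -big_filter (_ : [seq y <- vlist | E0 v13 y] = [:: v1; v7; v12; v15; v17]) in C13; last by vm_compute.
rewrite !big_cons big_nil in C13.
rewrite (Ganti v1 v13 isT) in C13.
rewrite (Ganti v7 v13 isT) in C13.
rewrite (Ganti v12 v13 isT) in C13.
have C14 := Gcons v14.
rewrite -big_filter (_ : [seq y <- vlist | E0 v14 y] = [:: v2; v8; v12; v15; v16]) in C14; last by vm_compute.
rewrite !big_cons big_nil in C14.
rewrite (Ganti v2 v14 isT) in C14.
rewrite (Ganti v8 v14 isT) in C14.
rewrite (Ganti v12 v14 isT) in C14.
have C15 := Gcons v15.
rewrite -big_filter (_ : [seq y <- vlist | E0 v15 y] = [:: v3; v9; v13; v14; v17]) in C15; last by vm_compute.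
rewrite !big_cons big_nil in C15.
rewrite (Ganti v3 v15 isT) in C15.
rewrite (Ganti v9 v15 isT) in C15.
rewrite (Ganti v13 v15 isT) in C15.
rewrite (Ganti v14 v15 isT) in C15.
have C16 := Gcons v16.
rewrite -big_filter (_ : [seq y <- vlist | E0 v16 y] = [:: v4; v10; v12; v14; v17]) in C16; last by vm_compute.
rewrite !big_cons big_nil in C16.
rewrite (Ganti v4 v16 isT) in C16.
rewrite (Ganti v10 v16 isT) in C16.
rewrite (Ganti v12 v16 isT) in C16.
rewrite (Ganti v14 v16 isT) in C16.
have C17 := Gcons v17.
rewrite -big_filter (_ : [seq y <- vlist | E0 v17 y] = [:: v5; v11; v13; v15; v16]) in C17; last by vm_compute.
rewrite !big_cons big_nil in C17.
rewrite (Ganti v5 v17 isT) in C17.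
rewrite (Ganti v11 v17 isT) in C17.
rewrite (Ganti v13 v17 isT) in C17.
rewrite (Ganti v15 v17 isT) in C17.
rewrite (Ganti v16 v17 isT) in C17.
rewrite elist_eq !big_cons big_nil /= in Gpar.
case/dvdzP: Gpar => k Hk.
have [c0 Ec0] : exists c : int, c = (1) * G v2 v3 + (1) * G v3 v5 + (1) * G v7 v11 + (- 1) * G v7 v13 + (- 1) * G v9 v11 + (2) * G v9 v15 + (1) * G v10 v11 + (1) * G v11 v17 + (- 1) * G v12 v14 + (1) * G v13 v17 + (1) * G v14 v15 + (1) * G v15 v17 by eexists.
have [c1 Ec1] : exists c : int, c = (- 1) * k + (- 1) * G v6 v7 + (- 1) * G v6 v8 + (- 1) * G v6 v10 + (1) * G v6 v12 + (- 1) * G v8 v14 + (- 1) * G v9 v15 + (- 1) * G v10 v11 + (1) * G v11 v17 + (1) * G v12 v13 + (- 1) * G v12 v16 + (- 1) * G v13 v15 + (- 1) * G v14 v15 + (- 1) * G v14 v16 + (- 1) * G v15 v17 by eexists.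
have [c2 Ec2] : exists c : int, c = (- 1) * G v2 v3 + (- 1) * G v6 v10 + (1) * G v8 v14 + (- 1) * G v10 v11 + (- 1) * G v10 v16 + (- 1) * G v11 v17 + (- 1) * G v12 v14 + (1) * G v12 v16 + (1) * G v15 v17 by eexists.
have [c3 Ec3] : exists c : int, c = (1) * G v3 v5 + (- 1) * G v4 v5 + (1) * G v6 v7 + (- 1) * G v6 v8 + (1) * G v6 v10 + (- 1) * G v8 v9 + (- 1) * G v9 v11 + (1) * G v9 v15 + (1) * G v12 v16 + (1) * G v13 v15 + (1) * G v14 v16 by eexists.
have [c4 Ec4] : exists c : int, c = (1) * G v2 v3 + (1) * G v4 v5 + (- 1) * G v6 v7 + (1) * G v6 v8 + (- 1) * G v7 v9 + (- 1) * G v7 v13 + (1) * G v9 v15 + (1) * G v10 v11 + (1) * G v10 v16 + (1) * G v12 v14 + (1) * G v13 v15 + (1) * G v13 v17 + (1) * G v14 v15 + (- 1) * G v15 v17 by eexists.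
have [c5 Ec5] : exists c : int, c = (- 1) * k + (- 1) * G v3 v5 + (- 1) * G v6 v7 + (1) * G v6 v8 + (1) * G v6 v10 + (- 1) * G v7 v9 + (- 1) * G v8 v9 + (- 2) * G v8 v14 + (1) * G v10 v11 + (1) * G v10 v16 + (- 1) * G v11 v17 + (1) * G v12 v13 + (1) * G v12 v16 by eexists.
have [c6 Ec6] : exists c : int, c = (1) * k + (1) * G v6 v8 + (- 1) * G v7 v9 + (1) * G v8 v9 + (1) * G v8 v10 + (1) * G v8 v14 + (1) * G v9 v11 + (1) * G v9 v15 + (1) * G v10 v11 + (- 1) * G v12 v14 + (- 1) * G v12 v16 + (1) * G v15 v17 by eexists.
have [c7 Ec7] : exists c : int, c = (- 1) * G v3 v5 + (1) * G v8 v10 + (- 1) * G v11 v17 + (- 2) * G v12 v13 + (- 1) * G v13 v15 + (- 1) * G v14 v16 + (- 1) * G v16 v17 by eexists.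
have [c8 Ec8] : exists c : int, c = (1) * k + (- 1) * G v3 v5 + (1) * G v6 v7 + (1) * G v6 v10 + (- 1) * G v6 v12 + (1) * G v7 v11 + (- 1) * G v7 v13 + (1) * G v10 v11 + (- 1) * G v12 v13 + (1) * G v12 v16 by eexists.
have [c9 Ec9] : exists c : int, c = (- 1) * k + (- 1) * G v6 v12 + (- 1) * G v7 v9 + (2) * G v7 v11 + (1) * G v7 v13 + (- 2) * G v8 v10 + (1) * G v11 v17 + (1) * G v12 v16 + (1) * G v13 v17 + (1) * G v15 v17 by eexists.
have [c10 Ec10] : exists c : int, c = (- 1) * G v4 v5 + (- 1) * G v6 v8 + (1) * G v6 v12 + (- 1) * G v7 v9 + (- 1) * G v7 v11 + (- 2) * G v7 v13 + (1) * G v8 v9 + (- 1) * G v10 v11 + (1) * G v10 v16 + (1) * G v14 v15 by eexists.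
have [c11 Ec11] : exists c : int, c = (1) * G v3 v5 + (1) * G v6 v8 + (1) * G v6 v12 + (- 1) * G v7 v9 + (2) * G v9 v11 + (1) * G v10 v11 + (- 2) * G v12 v16 + (1) * G v13 v15 + (1) * G v13 v17 + (- 1) * G v15 v17 by eexists.
have [c12 Ec12] : exists c : int, c = (- 1) * G v6 v8 + (- 1) * G v6 v12 + (- 1) * G v7 v13 + (1) * G v9 v15 + (1) * G v10 v11 + (1) * G v10 v16 + (2) * G v11 v17 + (1) * G v13 v17 + (- 1) * G v14 v16 + (- 1) * G v16 v17 by eexists.
have [c13 Ec13] : exists c : int, c = (1) * k + (- 1) * G v3 v5 + (1) * G v4 v5 + (1) * G v6 v8 + (1) * G v7 v11 + (1) * G v8 v10 + (1) * G v9 v11 + (- 1) * G v10 v16 + (1) * G v13 v15 + (- 1) * G v14 v16 by eexists.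
have [c14 Ec14] : exists c : int, c = (1) * G v4 v5 + (1) * G v6 v8 + (1) * G v6 v10 + (1) * G v7 v9 + (1) * G v8 v14 + (- 1) * G v9 v11 + (1) * G v9 v15 + (1) * G v12 v14 + (1) * G v12 v16 by eexists.
have [c15 Ec15] : exists c : int, c = (1) * G v4 v5 + (1) * G v6 v8 + (- 1) * G v6 v10 + (- 1) * G v7 v11 + (- 1) * G v7 v13 + (1) * G v11 v17 + (- 2) * G v13 v15 + (1) * G v13 v17 + (- 1) * G v14 v16 + (- 1) * G v16 v17 by eexists.
have [c16 Ec16] : exists c : int, c = (1) * k + (1) * G v7 v13 + (1) * G v8 v9 + (- 1) * G v10 v11 + (- 1) * G v11 v17 + (- 1) * G v12 v16 + (1) * G v13 v15 + (- 1) * G v14 v15 by eexists.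
have [c17 Ec17] : exists c : int, c = (- 1) * G v6 v8 + (1) * G v7 v11 + (1) * G v7 v13 + (1) * G v8 v14 + (1) * G v9 v11 + (1) * G v9 v15 + (- 1) * G v10 v16 + (1) * G v11 v17 + (- 1) * G v12 v16 + (2) * G v13 v15 + (- 1) * G v13 v17 + (1) * G v14 v16 by eexists.
have [c18 Ec18] : exists c : int, c = (1) * G v4 v5 + (1) * G v6 v8 + (- 1) * G v6 v10 + (- 1) * G v6 v12 + (1) * G v7 v9 + (1) * G v7 v11 + (1) * G v7 v13 + (- 1) * G v8 v9 + (- 2) * G v8 v10 + (1) * G v8 v14 + (1) * G v9 v11 + (- 1) * G v9 v15 + (- 1) * G v10 v11 + (- 1) * G v10 v16 + (1) * G v11 v17 + (- 1) * G v13 v15 + (- 1) * G v14 v15 by eexists.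
have [c19 Ec19] : exists c : int, c = (1) * G v7 v11 by eexists.
have [c20 Ec20] : exists c : int, c = (1) * G v6 v12 by eexists.
have [c21 Ec21] : exists c : int, c = (1) * k + (- 1) * G v3 v5 + (1) * G v4 v5 + (1) * G v6 v7 + (- 1) * G v6 v12 + (1) * G v7 v9 + (2) * G v7 v11 + (- 1) * G v8 v10 + (1) * G v8 v14 + (- 1) * G v10 v11 + (- 1) * G v12 v13 + (1) * G v12 v14 + (1) * G v12 v16 + (1) * G v13 v15 + (- 1) * G v14 v15 + (- 1) * G v15 v17 + (- 1) * G v16 v17 by eexists.
have [c22 Ec22] : exists c : int, c = (1) * G v4 v5 + (- 1) * G v6 v7 + (1) * G v6 v8 + (- 1) * G v6 v10 + (- 1) * G v7 v9 + (1) * G v7 v11 + (- 1) * G v7 v13 + (- 1) * G v8 v10 + (1) * G v9 v11 + (- 1) * G v9 v15 + (1) * G v10 v11 + (- 1) * G v11 v17 + (1) * G v12 v16 + (1) * G v14 v16 by eexists.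
have [c23 Ec23] : exists c : int, c = (- 1) * G v3 v5 + (1) * G v7 v11 + (- 1) * G v7 v13 + (- 1) * G v8 v9 + (1) * G v8 v10 + (- 1) * G v8 v14 + (1) * G v9 v11 + (- 1) * G v12 v13 + (- 1) * G v12 v14 + (- 1) * G v13 v15 + (- 1) * G v14 v16 by eexists.
have [c24 Ec24] : exists c : int, c = (1) * G v2 v3 + (1) * G v4 v5 + (- 1) * G v6 v7 + (- 1) * G v7 v13 + (- 1) * G v9 v11 + (1) * G v11 v17 + (1) * G v12 v13 + (- 1) * G v13 v15 + (1) * G v16 v17 by eexists.
have [c25 Ec25] : exists c : int, c = (- 1) * k + (1) * G v4 v5 + (- 1) * G v6 v12 + (1) * G v7 v11 + (- 1) * G v8 v9 + (- 1) * G v10 v16 + (1) * G v11 v17 + (1) * G v12 v13 + (- 1) * G v13 v17 + (1) * G v14 v16 + (1) * G v16 v17 by eexists.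
have [c26 Ec26] : exists c : int, c = (- 1) * k + (1) * G v6 v8 + (1) * G v7 v13 + (- 1) * G v9 v11 + (- 1) * G v10 v11 + (1) * G v12 v13 + (1) * G v12 v14 + (- 1) * G v13 v15 + (- 1) * G v14 v16 by eexists.
have [c27 Ec27] : exists c : int, c = (- 1) * G v4 v5 + (- 1) * G v6 v8 + (1) * G v6 v12 + (1) * G v8 v9 + (- 1) * G v8 v14 + (- 1) * G v10 v11 + (- 1) * G v11 v17 + (1) * G v12 v13 + (- 1) * G v12 v14 + (- 1) * G v13 v17 + (1) * G v14 v16 by eexists.
have [c28 Ec28] : exists c : int, c = (2) * G v2 v3 + (1) * G v3 v5 + (- 1) * G v6 v7 + (- 1) * G v7 v13 + (- 2) * G v8 v9 + (- 1) * G v8 v10 + (- 1) * G v10 v16 + (1) * G v11 v17 + (- 1) * G v12 v16 + (1) * G v13 v15 + (1) * G v13 v17 + (- 1) * G v15 v17 by eexists.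
have [c29 Ec29] : exists c : int, c = (2) * G v2 v3 + (1) * k + (- 1) * G v3 v5 + (1) * G v4 v5 + (1) * G v6 v8 + (1) * G v6 v10 + (- 1) * G v6 v12 + (2) * G v7 v9 + (- 1) * G v8 v9 + (1) * G v8 v14 + (1) * G v10 v11 + (- 1) * G v10 v16 + (1) * G v11 v17 + (- 1) * G v12 v13 + (1) * G v13 v15 + (- 1) * G v16 v17 by eexists.
have [c30 Ec30] : exists c : int, c = (1) * k + (- 1) * G v3 v5 + (1) * G v6 v7 + (1) * G v6 v8 + (1) * G v6 v10 + (- 1) * G v7 v13 + (1) * G v10 v11 + (1) * G v10 v16 + (- 1) * G v11 v17 + (- 1) * G v12 v13 + (- 1) * G v13 v17 + (1) * G v14 v16 by eexists.
have [c31 Ec31] : exists c : int, c = (- 1) * G v6 v12 + (1) * G v7 v9 + (1) * G v7 v11 + (- 1) * G v8 v10 + (- 1) * G v9 v15 + (- 1) * G v10 v16 + (- 1) * G v13 v15 + (- 1) * G v13 v17 by eexists.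
have [c32 Ec32] : exists c : int, c = (1) * G v2 v3 + (- 1) * G v6 v7 + (1) * G v6 v10 + (- 1) * G v7 v11 + (1) * G v7 v13 + (- 1) * G v8 v9 + (1) * G v8 v10 + (1) * G v8 v14 + (- 1) * G v9 v11 + (1) * G v9 v15 + (- 1) * G v10 v11 + (- 1) * G v10 v16 + (1) * G v12 v14 + (1) * G v13 v15 + (1) * G v14 v15 + (1) * G v16 v17 by eexists.
have [c33 Ec33] : exists c : int, c = (1) * G v8 v10 + (1) * G v8 v14 + (- 1) * G v9 v11 + (1) * G v9 v15 + (- 1) * G v10 v11 + (- 1) * G v12 v13 + (1) * G v13 v17 + (- 1) * G v14 v16 by eexists.
have [c34 Ec34] : exists c : int, c = (1) * G v2 v3 + (- 1) * k + (- 1) * G v3 v5 + (1) * G v4 v5 + (- 1) * G v6 v7 + (1) * G v6 v8 + (- 1) * G v6 v12 + (1) * G v7 v9 + (1) * G v7 v13 + (- 2) * G v8 v9 + (- 1) * G v9 v15 + (- 1) * G v10 v16 + (1) * G v11 v17 + (- 1) * G v14 v15 by eexists.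
have [c35 Ec35] : exists c : int, c = (- 1) * k + (1) * G v3 v5 + (- 1) * G v4 v5 + (- 1) * G v6 v8 + (- 1) * G v7 v9 + (- 1) * G v7 v11 + (2) * G v7 v13 + (1) * G v8 v9 + (- 1) * G v9 v11 + (1) * G v10 v16 + (- 1) * G v11 v17 + (1) * G v12 v13 + (- 1) * G v12 v16 + (- 1) * G v13 v17 + (1) * G v14 v16 + (1) * G v15 v17 + (1) * G v16 v17 by eexists.
have [c36 Ec36] : exists c : int, c = (- 1) * k + (1) * G v6 v12 + (- 1) * G v8 v10 + (- 1) * G v8 v14 + (- 1) * G v9 v11 + (1) * G v12 v13 + (1) * G v14 v15 + (1) * G v14 v16 by eexists.
have [c37 Ec37] : exists c : int, c = (1) * G v4 v5 + (1) * G v6 v8 + (1) * G v6 v12 + (- 1) * G v7 v9 + (1) * G v13 v17 + (- 1) * G v14 v16 by eexists.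
have [c38 Ec38] : exists c : int, c = (- 1) * k + (1) * G v4 v5 + (1) * G v6 v8 + (- 1) * G v6 v10 + (- 1) * G v6 v12 + (- 1) * G v7 v9 + (- 1) * G v8 v10 + (1) * G v8 v14 + (- 1) * G v9 v15 + (1) * G v12 v16 + (1) * G v13 v17 + (1) * G v14 v15 + (1) * G v15 v17 by eexists.
have [c39 Ec39] : exists c : int, c = (1) * G v6 v12 + (- 1) * G v7 v11 + (1) * G v7 v13 + (1) * G v8 v10 + (- 1) * G v8 v14 + (- 1) * G v12 v14 + (- 1) * G v13 v15 + (- 1) * G v14 v15 + (- 2) * G v14 v16 + (1) * G v15 v17 by eexists.
have [c40 Ec40] : exists c : int, c = (1) * G v6 v10 + (1) * G v6 v12 + (1) * G v7 v9 + (- 1) * G v7 v11 + (1) * G v8 v10 + (- 1) * G v9 v11 + (- 1) * G v11 v17 + (1) * G v12 v14 + (- 1) * G v14 v16 + (- 1) * G v15 v17 by eexists.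
have [c41 Ec41] : exists c : int, c = (- 1) * k + (1) * G v4 v5 + (- 1) * G v6 v7 + (1) * G v6 v8 + (1) * G v6 v10 + (1) * G v6 v12 + (1) * G v7 v9 + (- 1) * G v7 v11 + (- 1) * G v9 v11 + (- 1) * G v11 v17 + (1) * G v12 v13 + (1) * G v12 v14 + (- 1) * G v12 v16 + (- 1) * G v13 v15 + (- 1) * G v13 v17 + (1) * G v14 v15 + (- 1) * G v15 v17 by eexists.
have [c42 Ec42] : exists c : int, c = (1) * k + (1) * G v4 v5 + (1) * G v6 v8 + (1) * G v6 v10 + (- 1) * G v6 v12 + (- 1) * G v8 v9 + (1) * G v9 v15 + (1) * G v10 v11 + (- 1) * G v11 v17 + (1) * G v12 v14 + (1) * G v12 v16 + (2) * G v13 v15 + (1) * G v14 v16 + (- 1) * G v15 v17 by eexists.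
have [c43 Ec43] : exists c : int, c = (- 1) * G v2 v3 + (1) * G v6 v7 + (- 1) * G v6 v8 + (- 1) * G v6 v10 + (- 1) * G v6 v12 + (1) * G v8 v14 + (1) * G v9 v11 + (- 1) * G v9 v15 + (1) * G v13 v15 + (- 1) * G v13 v17 + (1) * G v14 v16 + (- 1) * G v16 v17 by eexists.
have [c44 Ec44] : exists c : int, c = (1) * G v3 v5 + (1) * G v6 v8 + (1) * G v6 v10 + (- 1) * G v7 v11 + (2) * G v7 v13 + (1) * G v8 v9 + (- 1) * G v9 v11 + (1) * G v9 v15 + (1) * G v10 v11 + (1) * G v12 v13 + (1) * G v12 v14 + (1) * G v13 v15 + (1) * G v13 v17 + (- 1) * G v14 v15 by eexists.
have [c45 Ec45] : exists c : int, c = (1) * G v3 v5 + (- 1) * G v4 v5 + (- 1) * G v6 v7 + (- 1) * G v6 v8 + (- 1) * G v6 v10 + (1) * G v6 v12 + (- 1) * G v7 v9 + (- 1) * G v7 v11 + (1) * G v8 v9 + (- 1) * G v9 v15 + (- 1) * G v10 v11 + (- 1) * G v10 v16 + (1) * G v12 v13 + (- 1) * G v12 v14 + (- 1) * G v12 v16 + (- 1) * G v13 v17 + (1) * G v14 v15 + (1) * G v14 v16 + (1) * G v15 v17 + (1) * G v16 v17 by eexists.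
have [c46 Ec46] : exists c : int, c = (- 1) * G v3 v5 + (1) * G v6 v8 + (- 1) * G v6 v10 + (1) * G v6 v12 + (- 1) * G v7 v11 + (- 1) * G v8 v9 + (- 1) * G v8 v14 + (1) * G v9 v11 + (- 2) * G v9 v15 + (- 1) * G v10 v11 + (- 1) * G v10 v16 + (- 1) * G v11 v17 + (- 1) * G v12 v14 + (- 1) * G v13 v15 + (- 1) * G v14 v15 + (- 1) * G v14 v16 by eexists.
have [c47 Ec47] : exists c : int, c = (- 1) * G v2 v3 + (1) * k + (1) * G v6 v7 + (1) * G v6 v12 + (- 1) * G v7 v9 + (- 1) * G v7 v13 + (- 1) * G v8 v14 + (1) * G v9 v11 + (1) * G v9 v15 + (1) * G v10 v16 + (1) * G v13 v17 + (- 1) * G v15 v17 + (- 1) * G v16 v17 by eexists.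
have [c48 Ec48] : exists c : int, c = (1) * G v6 v8 + (1) * G v6 v12 + (- 1) * G v7 v11 + (- 1) * G v8 v9 + (1) * G v8 v10 + (- 1) * G v8 v14 + (- 1) * G v9 v11 + (1) * G v10 v16 + (- 1) * G v11 v17 + (1) * G v13 v17 + (- 1) * G v14 v16 by eexists.
have [c49 Ec49] : exists c : int, c = (1) * G v2 v3 + (1) * k + (- 1) * G v6 v10 + (1) * G v7 v9 + (- 1) * G v7 v11 + (- 1) * G v7 v13 + (- 1) * G v8 v9 + (1) * G v8 v14 + (- 1) * G v9 v15 + (- 1) * G v10 v11 + (- 1) * G v10 v16 + (- 1) * G v12 v13 + (1) * G v13 v17 + (- 1) * G v14 v16 by eexists.
have [c50 Ec50] : exists c : int, c = (1) * G v7 v13 + (- 1) * G v9 v15 by eexists.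
have [c51 Ec51] : exists c : int, c = (- 1) * G v2 v3 + (1) * G v3 v5 + (- 1) * G v4 v5 + (2) * G v6 v7 + (- 1) * G v6 v8 + (1) * G v6 v12 + (- 1) * G v7 v9 + (1) * G v7 v13 + (1) * G v8 v9 + (1) * G v9 v15 + (1) * G v10 v16 + (- 1) * G v12 v14 + (- 1) * G v12 v16 + (1) * G v14 v15 + (1) * G v14 v16 + (1) * G v15 v17 by eexists.
have [c52 Ec52] : exists c : int, c = (- 1) * G v2 v3 + (- 1) * k + (1) * G v4 v5 + (- 1) * G v6 v10 + (1) * G v6 v12 + (- 1) * G v7 v9 + (1) * G v7 v13 + (- 1) * G v8 v9 + (- 1) * G v8 v14 + (1) * G v9 v11 + (- 1) * G v9 v15 + (- 1) * G v11 v17 by eexists.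
have [c53 Ec53] : exists c : int, c = (1) * G v4 v5 + (- 1) * G v8 v10 + (1) * G v9 v11 + (- 1) * G v9 v15 + (1) * G v12 v14 + (- 1) * G v15 v17 + (- 1) * G v16 v17 by eexists.
have [c54 Ec54] : exists c : int, c = (- 2) * G v2 v3 + (- 1) * k + (1) * G v3 v5 + (1) * G v6 v7 + (- 1) * G v6 v8 + (- 1) * G v6 v10 + (- 1) * G v6 v12 + (1) * G v7 v11 + (1) * G v7 v13 + (1) * G v8 v9 + (1) * G v8 v14 + (- 1) * G v9 v15 + (1) * G v11 v17 + (1) * G v12 v13 + (- 1) * G v13 v15 + (1) * G v14 v15 + (1) * G v14 v16 + (1) * G v15 v17 + (1) * G v16 v17 by eexists.
have [c55 Ec55] : exists c : int, c = (- 1) * G v2 v3 + (1) * G v6 v7 + (- 1) * G v6 v10 + (1) * G v6 v12 + (- 1) * G v7 v9 + (1) * G v7 v11 + (- 1) * G v10 v11 + (- 1) * G v12 v13 by eexists.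
have [c56 Ec56] : exists c : int, c = (1) * G v3 v5 + (- 1) * G v4 v5 + (1) * G v8 v9 + (1) * G v10 v11 + (- 1) * G v12 v14 + (1) * G v13 v17 + (1) * G v14 v15 + (1) * G v15 v17 by eexists.
have [c57 Ec57] : exists c : int, c = (- 1) * k + (1) * G v3 v5 + (- 1) * G v4 v5 + (- 1) * G v6 v7 + (- 1) * G v6 v8 + (1) * G v8 v9 + (1) * G v9 v15 + (1) * G v11 v17 + (1) * G v12 v13 + (- 1) * G v13 v15 by eexists.
have [c58 Ec58] : exists c : int, c = (- 1) * k + (- 1) * G v7 v11 + (- 1) * G v8 v9 + (1) * G v8 v10 + (- 1) * G v13 v15 by eexists.
have [c59 Ec59] : exists c : int, c = (- 1) * G v4 v5 + (- 1) * G v6 v8 + (1) * G v7 v11 + (1) * G v7 v13 + (1) * G v8 v9 + (1) * G v10 v11 + (- 1) * G v12 v14 + (1) * G v13 v15 + (1) * G v14 v16 + (1) * G v15 v17 by eexists.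
have [c60 Ec60] : exists c : int, c = (- 1) * G v3 v5 + (1) * G v4 v5 + (1) * G v6 v8 + (1) * G v7 v9 + (1) * G v7 v13 + (- 1) * G v8 v10 + (- 1) * G v8 v14 + (1) * G v12 v14 + (- 1) * G v15 v17 + (- 1) * G v16 v17 by eexists.
have [c61 Ec61] : exists c : int, c = (1) * G v6 v8 + (- 1) * G v6 v10 + (1) * G v7 v11 + (- 1) * G v8 v10 + (1) * G v9 v11 + (- 1) * G v9 v15 + (1) * G v11 v17 + (- 1) * G v13 v15 + (1) * G v13 v17 + (- 1) * G v14 v15 by eexists.
have [c62 Ec62] : exists c : int, c = (- 1) * G v2 v3 + (- 1) * G v3 v5 + (1) * G v7 v11 + (- 1) * G v7 v13 + (- 1) * G v8 v14 + (1) * G v9 v11 + (- 1) * G v10 v11 + (- 1) * G v12 v14 + (1) * G v12 v16 + (- 1) * G v13 v17 + (- 1) * G v14 v15 by eexists.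
have [c63 Ec63] : exists c : int, c = (- 1) * G v3 v5 + (- 1) * G v7 v11 + (1) * G v8 v10 + (- 1) * G v8 v14 + (1) * G v10 v16 + (1) * G v12 v13 + (1) * G v12 v16 + (- 1) * G v13 v15 + (- 1) * G v14 v15 + (- 1) * G v14 v16 by eexists.
have [c64 Ec64] : exists c : int, c = (1) * G v2 v3 + (- 1) * k + (- 1) * G v3 v5 + (1) * G v4 v5 + (- 2) * G v6 v7 + (2) * G v6 v8 + (1) * G v6 v10 + (- 1) * G v7 v11 + (- 1) * G v8 v9 + (1) * G v8 v10 + (- 1) * G v8 v14 + (- 1) * G v9 v11 + (2) * G v10 v11 + (1) * G v10 v16 + (- 1) * G v11 v17 + (1) * G v12 v14 + (- 1) * G v13 v15 + (- 1) * G v14 v16 + (- 1) * G v15 v17 by eexists.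
exists [:: c0; c1; c2; c3; c4; c5; c6; c7; c8; c9; c10; c11; c12; c13; c14; c15; c16; c17; c18; c19; c20; c21; c22; c23; c24; c25; c26; c27; c28; c29; c30; c31; c32; c33; c34; c35; c36; c37; c38; c39; c40; c41; c42; c43; c44; c45; c46; c47; c48; c49; c50; c51; c52; c53; c54; c55; c56; c57; c58; c59; c60; c61; c62; c63; c64].
move=> p; rewrite elist_eq !inE.
case/orP => [/eqP -> | ].
  rewrite (_ : hrow (v0, v1).1 (v0, v1).2 = [:: (- 1); 0; 1; 0; 0; 0; 1; 0; (- 1); 1; 0; 0; 1; 0; 1; 1; 0; 0; (- 1); 0; 0; 1; 0; 0; (- 1); 0; 0; 0; 1; 0; 0; 0; 0; 0; 0; 1; 1; (- 1); (- 1); 1; 1; (- 1); 1; (- 1); (- 1); 1; 0; 0; 0; 0; 0; 0; (- 1); 1; 1; 0; 0; (- 1); 1; 0; 0; 1; 1; (- 1); 1]); last by vm_compute.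
  rewrite /= !big_cons big_nil /=. lia.
case/orP => [/eqP -> | ].
  rewrite (_ : hrow (v0, v2).1 (v0, v2).2 = [:: 0; 1; 0; (- 1); (- 1); 0; 0; 0; 1; 0; 0; 0; 0; 0; (- 1); (- 1); 0; (- 1); 0; 0; (- 1); 0; 1; (- 1); 0; 1; (- 1); 1; 0; 0; 0; 1; 1; 1; 0; (- 1); 0; 1; 0; 0; 0; 0; 0; 1; 0; 0; (- 1); 0; 0; 0; 0; 1; 0; (- 1); (- 1); 0; 1; 0; 0; (- 1); 1; 0; (- 1); 1; 0]); last by vm_compute.
  rewrite /= !big_cons big_nil /=. lia.
case/orP => [/eqP -> | ].
  rewrite (_ : hrow (v0, v4).1 (v0, v4).2 = [:: 1; (- 1); 0; 0; 0; 1; 0; 0; 0; (- 1); 1; 1; (- 1); (- 1); 0; 0; 0; 1; 0; 0; 1; 0; (- 1); 0; 1; 0; 0; (- 1); (- 1); 0; (- 1); 0; (- 1); 0; 0; 0; 0; 0; 0; 0; (- 1); 0; 0; 0; 0; (- 1); 0; (- 1); 0; 1; 1; 0; 1; 0; 0; 0; (- 1); 1; (- 1); 0; 0; 0; 0; 0; 0]); last by vm_compute.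
  rewrite /= !big_cons big_nil /=. lia.
case/orP => [/eqP -> | ].
  rewrite (_ : hrow (v0, v6).1 (v0, v6).2 = [:: 0; 0; 0; 1; 0; 0; (- 1); (- 1); 0; 0; (- 1); 0; 0; 0; 0; 0; 1; 0; 0; (- 1); 0; (- 1); 0; 1; 0; 0; 1; 0; 0; 1; 1; (- 1); 0; 0; (- 1); 0; (- 1); 0; 1; 0; 0; 1; (- 1); 0; 0; 0; 0; 1; (- 1); 0; 0; (- 1); 0; 0; 0; 1; 0; 0; 0; 1; 0; 0; 0; 0; 0]); last by vm_compute.
  rewrite /= !big_cons big_nil /=. lia.
case/orP => [/eqP -> | ].
  rewrite (_ : hrow (v0, v12).1 (v0, v12).2 = [:: 0; 0; (- 1); 0; 1; (- 1); 0; 1; 0; 0; 0; (- 1); 0; 1; 0; 0; (- 1); 0; 1; 1; 0; 0; 0; 0; 0; (- 1); 0; 0; 0; (- 1); 0; 0; 0; (- 1); 1; 0; 0; 0; 0; (- 1); 0; 0; 0; 0; 1; 0; 1; 0; 1; (- 1); (- 1); 0; 0; 0; 0; (- 1); 0; 0; 0; 0; (- 1); (- 1); 0; 0; (- 1)]); last by vm_compute.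
  rewrite /= !big_cons big_nil /=. lia.
case/orP => [/eqP -> | ].
  rewrite (_ : hrow (v1, v3).1 (v1, v3).2 = [:: 0; 1; 0; 1; 0; 0; 0; 0; 0; 0; 0; (- 1); 0; 1; 0; 1; 1; 1; 0; 0; 1; 0; 1; 0; (- 1); 0; 0; (- 1); 0; (- 1); 1; 0; 0; 0; 1; 0; 0; (- 1); 0; 0; 0; 0; 0; (- 1); 0; 0; 0; 0; 0; 0; 0; 1; 0; 1; 0; (- 1); 1; 0; 0; (- 1); (- 1); 0; 0; 0; 0]); last by vm_compute.
  rewrite /= !big_cons big_nil /=. lia.
case/orP => [/eqP -> | ].
  rewrite (_ : hrow (v1, v5).1 (v1, v5).2 = [:: 0; 0; 0; (- 1); 0; 1; 0; 1; 0; 0; (- 1); 0; 0; 0; 1; 0; (- 1); 0; 0; (- 1); (- 1); 0; (- 1); (- 1); 0; 0; 1; 0; 1; 0; 0; (- 1); (- 1); 0; 0; 1; 0; 0; 0; 0; 1; 0; 1; 0; (- 1); 1; 0; 1; (- 1); 1; 1; 0; (- 1); 0; 0; 1; 0; 0; 0; 1; 0; 0; 1; 0; 0]); last by vm_compute.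
  rewrite /= !big_cons big_nil /=. lia.
case/orP => [/eqP -> | ].
  rewrite (_ : hrow (v1, v7).1 (v1, v7).2 = [:: 0; 0; 1; 0; (- 1); (- 1); 1; (- 1); 0; 0; 1; 1; 0; 0; 0; 0; 0; (- 1); 0; 1; 0; 1; 0; 1; 0; (- 1); (- 1); 0; 0; 0; (- 1); 1; 1; (- 1); 0; 0; 1; 0; 0; 0; 0; (- 1); 0; 0; 0; 0; (- 1); (- 1); 1; (- 1); 0; 0; 0; 0; 0; 0; (- 1); 0; 1; 0; 1; 0; 0; 0; 1]); last by vm_compute.
  rewrite /= !big_cons big_nil /=. lia.
case/orP => [/eqP -> | ].
  rewrite (_ : hrow (v1, v13).1 (v1, v13).2 = [:: (- 1); (- 1); 0; 0; 1; 0; 0; 0; (- 1); 1; 0; 0; 1; (- 1); 0; 0; 0; 0; (- 1); 0; 0; 0; 0; 0; 0; 1; 0; 1; 0; 1; 0; 0; 0; 1; (- 1); 0; 0; 0; (- 1); 1; 0; 0; 0; 0; 0; 0; 1; 0; 0; 0; (- 1); (- 1); 0; 0; 1; 0; 0; (- 1); 0; 0; 0; 1; 0; (- 1); 0]); last by vm_compute.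
  rewrite /= !big_cons big_nil /=. lia.
case/orP => [/eqP -> | ].
  rewrite (_ : hrow (v2, v3).1 (v2, v3).2 = [:: 1; 0; 1; 0; 0; 1; (- 1); 1; 0; (- 1); 1; 1; 1; 0; 0; 0; 0; (- 1); 1; 1; 0; (- 1); 0; (- 1); 0; 1; 0; 1; 0; 1; 0; 0; 1; 0; (- 1); 0; (- 1); 0; (- 1); (- 1); (- 1); 0; (- 1); 0; 1; (- 1); 0; (- 1); (- 1); 0; 1; 0; 1; 0; 0; 1; 0; (- 1); (- 1); 0; 0; 0; 0; 1; 0]); last by vm_compute.
  rewrite /= !big_cons big_nil /=. lia.
case/orP => [/eqP -> | ].
  rewrite (_ : hrow (v2, v4).1 (v2, v4).2 = [:: 0; 0; 0; 0; (- 1); 0; 0; (- 1); 0; 0; 0; 0; 0; 0; (- 1); 0; 0; 0; 0; 0; 0; 1; 0; 0; 0; 0; 0; 0; 0; (- 1); 1; 1; 0; 1; 0; (- 1); 0; 1; 0; 0; 0; (- 1); 0; 0; 0; 1; 0; 0; 0; 0; (- 1); 0; 0; 0; 0; (- 1); 0; 0; 0; 0; 1; (- 1); (- 1); 0; 1]); last by vm_compute.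
  rewrite /= !big_cons big_nil /=. lia.
case/orP => [/eqP -> | ].
  rewrite (_ : hrow (v2, v8).1 (v2, v8).2 = [:: 0; 1; 0; (- 1); 0; 0; 1; 0; 0; 1; (- 1); 0; (- 1); (- 1); 0; (- 1); (- 1); 0; (- 1); 0; (- 1); 0; 0; 0; 1; 0; 0; 0; (- 1); 0; 0; 0; 0; 0; 1; 0; 0; 0; 0; 0; 1; 0; 0; 1; 0; 0; (- 1); 1; 0; 1; 0; 0; 0; 0; (- 1); 0; 1; 0; 0; (- 1); 0; 0; 0; 0; (- 1)]); last by vm_compute.
  rewrite /= !big_cons big_nil /=. lia.
case/orP => [/eqP -> | ].
  rewrite (_ : hrow (v2, v14).1 (v2, v14).2 = [:: (- 1); 0; (- 1); 0; 0; (- 1); 0; 0; 1; 0; 0; (- 1); 0; 1; 0; 0; 1; 0; 0; (- 1); 0; 0; 1; 0; (- 1); 0; (- 1); 0; 1; 0; (- 1); 0; 0; 0; 0; 0; 1; 0; 1; 1; 0; 1; 1; 0; (- 1); 0; 0; 0; 1; (- 1); 0; 1; (- 1); (- 1); 0; 0; 0; 1; 1; 0; 0; 1; 0; 0; 0]); last by vm_compute.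
  rewrite /= !big_cons big_nil /=. lia.
case/orP => [/eqP -> | ].
  rewrite (_ : hrow (v3, v5).1 (v3, v5).2 = [:: 0; 1; 1; 0; 1; 0; (- 1); 0; 0; 0; 0; 0; 0; 0; (- 1); 1; 0; 0; 0; 0; 0; 0; 0; 0; 0; 0; 0; 0; 0; 0; 1; 1; 1; 0; 0; (- 1); (- 1); (- 1); 0; 0; 0; 1; 0; 0; 1; 0; (- 1); (- 1); 0; (- 1); 0; 1; 1; 0; (- 1); 0; 1; (- 1); 0; 0; (- 1); 1; 0; 1; (- 1)]); last by vm_compute.
  rewrite /= !big_cons big_nil /=. lia.
case/orP => [/eqP -> | ].
  rewrite (_ : hrow (v3, v9).1 (v3, v9).2 = [:: 1; 0; 0; 1; (- 1); 1; 0; 0; (- 1); (- 1); 1; 0; 1; 1; 0; 0; 0; 0; 1; 1; 1; 0; 0; 0; (- 1); 1; (- 1); 0; (- 1); 0; 0; 0; 0; 1; 0; 1; 0; 0; 0; (- 1); 0; (- 1); 0; (- 1); 0; 0; 1; 0; (- 1); 0; 0; 0; 0; 1; 0; 0; 0; 0; (- 1); (- 1); 0; 0; (- 1); 0; 1]); last by vm_compute.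
  rewrite /= !big_cons big_nil /=. lia.
case/orP => [/eqP -> | ].
  rewrite (_ : hrow (v3, v15).1 (v3, v15).2 = [:: 0; 0; 0; 0; 0; 0; 0; 1; 1; 0; 0; 0; 0; 0; 1; 0; 1; 0; 0; 0; 0; (- 1); 1; (- 1); 0; 0; 1; 0; 1; 0; 0; (- 1); 0; (- 1); 0; 0; 0; 0; (- 1); 0; (- 1); 0; (- 1); 0; 0; (- 1); 0; 0; 0; 1; 1; 0; 0; 0; 1; 0; 0; 0; 0; 0; 0; (- 1); 1; 0; 0]); last by vm_compute.
  rewrite /= !big_cons big_nil /=. lia.
case/orP => [/eqP -> | ].
  rewrite (_ : hrow (v4, v5).1 (v4, v5).2 = [:: 1; (- 1); (- 1); 1; 0; 0; 1; 0; 1; (- 1); 0; 0; 0; (- 1); 0; (- 1); 1; 1; 0; 0; 1; 0; 0; 1; 1; (- 1); 0; 0; 0; (- 1); 0; 0; 0; 1; 1; 0; 1; 0; 1; 1; 0; 0; 0; 1; 0; 0; 1; 0; 0; 0; 0; (- 1); 0; 1; 1; 0; 0; 1; (- 1); (- 1); 1; 0; 0; 0; 0]); last by vm_compute.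
  rewrite /= !big_cons big_nil /=. lia.
case/orP => [/eqP -> | ].
  rewrite (_ : hrow (v4, v10).1 (v4, v10).2 = [:: 0; 0; 0; (- 1); (- 1); 0; 0; 0; (- 1); 0; 1; 0; (- 1); 0; (- 1); 0; (- 1); 0; 1; 1; 0; 1; 0; (- 1); 0; 1; (- 1); (- 1); 0; 0; 0; 1; 0; 0; (- 1); (- 1); 0; 0; 0; (- 1); 0; (- 1); (- 1); 0; 1; 0; (- 1); 0; 1; 0; 0; 1; 1; (- 1); (- 1); (- 1); 0; 0; 0; 0; 0; (- 1); 0; 1; 1]); last by vm_compute.
  rewrite /= !big_cons big_nil /=. lia.
case/orP => [/eqP -> | ].
  rewrite (_ : hrow (v4, v16).1 (v4, v16).2 = [:: 0; 0; 1; 0; 0; 1; (- 1); (- 1); 0; 0; 0; 1; 0; 0; 0; 1; 0; 0; (- 1); (- 1); 0; 0; (- 1); 0; 0; 0; 1; 0; (- 1); 0; 0; 0; (- 1); 0; 0; 0; (- 1); 1; (- 1); 0; (- 1); 0; 1; (- 1); (- 1); 0; 0; (- 1); (- 1); 1; 0; 0; 0; 0; 0; 0; (- 1); 0; 0; 1; 0; 0; (- 1); (- 1); 0]); last by vm_compute.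
  rewrite /= !big_cons big_nil /=. lia.
case/orP => [/eqP -> | ].
  rewrite (_ : hrow (v5, v11).1 (v5, v11).2 = [:: 1; 0; 0; 0; 1; 0; 0; 0; 0; 0; (- 1); (- 1); (- 1); 0; 0; 0; 0; 0; (- 1); (- 1); 0; (- 1); (- 1); 0; 0; (- 1); 0; (- 1); 1; (- 1); 1; 0; 0; 1; 1; 0; 0; 0; 0; 0; 0; 1; 0; 1; 0; 0; 0; 0; (- 1); 0; 1; 0; 0; 1; 0; 0; 0; 0; (- 1); 0; 0; 1; 1; 1; (- 1)]); last by vm_compute.
  rewrite /= !big_cons big_nil /=. lia.
case/orP => [/eqP -> | ].
  rewrite (_ : hrow (v5, v17).1 (v5, v17).2 = [:: 0; 0; 0; 0; 0; 1; 0; 1; 1; (- 1); 0; 1; 1; (- 1); 0; 0; 0; 1; 1; 0; 0; 1; 0; 0; 1; 0; 1; 1; 0; 0; 0; 0; 0; 0; 0; 0; 0; (- 1); 1; 1; 1; 0; 1; 0; 0; 1; 0; 0; 0; 0; 0; 0; 0; 0; 0; 1; 1; 0; 0; 0; 0; 0; 0; 0; 0]); last by vm_compute.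
  rewrite /= !big_cons big_nil /=. lia.
case/orP => [/eqP -> | ].
  rewrite (_ : hrow (v6, v7).1 (v6, v7).2 = [:: (- 1); 1; 0; 0; 1; 1; 0; 0; 1; (- 1); (- 1); 0; 0; 0; 1; 0; 0; 0; 0; 0; 0; 0; 1; 0; (- 1); 0; 0; 0; 1; 1; 0; 0; 0; 0; 0; 1; 0; (- 1); 1; 1; 0; 0; (- 1); (- 1); 0; 0; 0; 1; 0; 0; (- 1); 0; (- 1); 0; 1; 1; 0; 0; 0; 0; 0; (- 1); 0; 0; (- 1)]); last by vm_compute.
  rewrite /= !big_cons big_nil /=. lia.
case/orP => [/eqP -> | ].
  rewrite (_ : hrow (v6, v8).1 (v6, v8).2 = [:: 1; (- 1); (- 1); 0; (- 1); (- 1); (- 1); 0; 0; 0; 0; 0; 1; 1; (- 1); 0; 0; 0; 1; (- 1); 1; 0; 0; 0; 0; (- 1); 1; 1; 0; 0; 0; (- 1); 0; 0; (- 1); 0; 0; 0; 0; (- 1); (- 1); 1; 0; 0; 1; 0; 0; 0; (- 1); 0; 1; (- 1); 1; (- 1); 0; 0; 0; (- 1); 1; 0; (- 1); 0; 1; 0; 1]); last by vm_compute.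
  rewrite /= !big_cons big_nil /=. lia.
case/orP => [/eqP -> | ].
  rewrite (_ : hrow (v6, v10).1 (v6, v10).2 = [:: 0; 0; 0; 0; 0; 0; 0; (- 1); 0; 0; 0; (- 1); 0; (- 1); 0; 1; 1; 1; (- 1); 0; (- 1); 0; 0; 0; 0; 0; 0; 0; 0; 0; 0; 0; 1; (- 1); 0; 0; (- 1); 1; 0; 0; 1; 0; 0; 0; (- 1); (- 1); 1; 0; 0; (- 1); 0; 0; 0; 0; 0; 0; 1; 0; 0; 0; 0; 1; 0; (- 1); 0]); last by vm_compute.
  rewrite /= !big_cons big_nil /=. lia.
case/orP => [/eqP -> | ].
  rewrite (_ : hrow (v6, v12).1 (v6, v12).2 = [:: 0; 0; 1; 1; 0; 0; 0; 0; (- 1); 1; 0; 1; (- 1); 0; 0; (- 1); 0; (- 1); 0; 0; 0; (- 1); (- 1); 1; 1; 1; 0; (- 1); (- 1); 0; 1; 0; (- 1); 1; 0; (- 1); 0; 0; 0; 0; 0; 0; 0; 1; 0; 1; (- 1); 0; 0; 1; 0; 0; 0; 1; (- 1); 0; (- 1); 1; (- 1); 1; 1; 0; (- 1); 1; 0]); last by vm_compute.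
  rewrite /= !big_cons big_nil /=. lia.
case/orP => [/eqP -> | ].
  rewrite (_ : hrow (v7, v9).1 (v7, v9).2 = [:: 0; 1; 0; 0; 0; 0; 1; 0; 0; 0; 0; 0; (- 1); (- 1); 1; (- 1); 0; 0; (- 1); 0; 0; 0; 0; 0; 0; (- 1); 0; (- 1); 1; 1; (- 1); 1; 0; 0; (- 1); 0; 0; 0; 0; 0; (- 1); 0; 0; 0; 0; 0; 0; 0; 0; 0; (- 1); 0; 0; 0; 1; 0; 0; (- 1); 1; 0; 1; 0; 1; 1; 0]); last by vm_compute.
  rewrite /= !big_cons big_nil /=. lia.
case/orP => [/eqP -> | ].
  rewrite (_ : hrow (v7, v11).1 (v7, v11).2 = [:: (- 1); 0; 0; 1; 0; 0; 0; 0; 1; (- 1); 0; 1; 1; 1; 0; 1; 1; (- 1); 1; 0; 1; 0; 0; 0; 0; 0; 0; 1; 0; 0; 0; 0; 1; (- 1); 0; 1; 1; 0; 1; 1; 0; 0; 0; 0; (- 1); (- 1); (- 1); 0; 0; 0; 0; (- 1); 0; (- 1); 0; 1; 0; 1; 0; 1; 0; 0; 0; (- 1); 0]); last by vm_compute.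
  rewrite /= !big_cons big_nil /=. lia.
case/orP => [/eqP -> | ].
  rewrite (_ : hrow (v7, v13).1 (v7, v13).2 = [:: 0; 0; 1; (- 1); 0; 0; 0; (- 1); 0; 0; 0; 0; 0; 0; 0; 0; (- 1); 0; 0; 1; (- 1); 1; 1; 1; (- 1); 0; (- 1); 0; 0; 0; 0; 0; 0; 0; 1; 0; 0; (- 1); 0; 0; 1; (- 1); (- 1); (- 1); 1; 1; 0; 0; 1; (- 1); 0; 1; (- 1); 1; 0; 0; (- 1); 0; 0; (- 1); 0; (- 1); (- 1); 0; 0]); last by vm_compute.
  rewrite /= !big_cons big_nil /=. lia.
case/orP => [/eqP -> | ].
  rewrite (_ : hrow (v8, v9).1 (v8, v9).2 = [:: 0; 0; (- 1); 0; 0; 0; 0; 1; 0; 0; 0; (- 1); 0; 0; 0; 0; (- 1); 1; 0; 0; 0; 1; (- 1); 1; 0; 0; 0; 1; 0; (- 1); 0; (- 1); (- 1); (- 1); 0; 0; (- 1); 1; 1; 0; 0; 1; 1; 0; 1; 1; 0; 0; 0; 1; 0; 0; 0; (- 1); 0; (- 1); 0; 0; 0; 0; 0; 1; 0; (- 1); 0]); last by vm_compute.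
  rewrite /= !big_cons big_nil /=. lia.
case/orP => [/eqP -> | ].
  rewrite (_ : hrow (v8, v10).1 (v8, v10).2 = [:: 1; 0; 0; 0; 0; (- 1); 0; 0; 1; 1; 0; 1; 0; 0; 0; (- 1); 0; 0; 0; (- 1); 0; (- 1); 1; 0; 1; (- 1); 1; 0; (- 1); 1; (- 1); 0; 0; 1; 0; 1; 1; (- 1); (- 1); 0; 0; 0; 0; 1; 0; 0; 0; 1; 0; 0; 1; (- 1); 0; 0; 0; 0; 0; (- 1); 1; (- 1); 0; 0; 1; 0; 0]); last by vm_compute.
  rewrite /= !big_cons big_nil /=. lia.
case/orP => [/eqP -> | ].
  rewrite (_ : hrow (v8, v14).1 (v8, v14).2 = [:: 0; 0; 0; (- 1); (- 1); 0; 0; (- 1); (- 1); 0; (- 1); 0; 0; 0; (- 1); 0; 0; (- 1); 0; 0; 0; 0; 0; (- 1); 0; 0; 0; 0; 0; 0; 1; 0; 1; 0; 0; (- 1); 0; 0; 0; (- 1); 0; 0; (- 1); 0; 0; (- 1); (- 1); 0; (- 1); 0; 0; 0; 1; 0; (- 1); 1; 1; 0; 0; 0; (- 1); (- 1); 0; 1; 0]); last by vm_compute.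
  rewrite /= !big_cons big_nil /=. lia.
case/orP => [/eqP -> | ].
  rewrite (_ : hrow (v9, v11).1 (v9, v11).2 = [:: 0; 1; (- 1); 0; 0; 1; 0; 1; (- 1); 0; 0; 0; 0; 0; 1; 0; (- 1); 0; 0; 1; 0; 1; 0; 1; (- 1); 0; (- 1); 0; 0; 0; 0; 0; 0; 0; (- 1); 0; 0; 1; 0; 0; (- 1); 0; 1; 0; 1; 1; 1; (- 1); 0; 1; (- 1); 1; (- 1); 0; 1; (- 1); (- 1); 0; 0; 0; 0; 0; 0; 0; 0]); last by vm_compute.
  rewrite /= !big_cons big_nil /=. lia.
case/orP => [/eqP -> | ].
  rewrite (_ : hrow (v9, v15).1 (v9, v15).2 = [:: 1; 0; 0; 1; (- 1); 0; 1; 0; 0; (- 1); 1; (- 1); 0; 0; 0; (- 1); 0; 1; 0; 0; 1; 0; (- 1); 0; 0; 0; 0; 0; 0; 0; (- 1); 0; (- 1); 0; 0; 1; (- 1); 0; 1; (- 1); 0; 0; 0; (- 1); 0; 0; 0; 1; (- 1); 0; 0; (- 1); 1; 0; 0; 0; 1; (- 1); 0; (- 1); 1; 1; 0; 0; 1]); last by vm_compute.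
  rewrite /= !big_cons big_nil /=. lia.
case/orP => [/eqP -> | ].
  rewrite (_ : hrow (v10, v11).1 (v10, v11).2 = [:: 0; (- 1); 1; (- 1); 0; (- 1); (- 1); (- 1); 0; 1; 0; 0; 0; 0; (- 1); 0; 0; 1; 0; 0; (- 1); 0; 0; (- 1); 1; 0; 0; 0; (- 1); 1; 0; 1; 0; 0; 0; 0; 0; 0; (- 1); (- 1); 1; (- 1); (- 1); 0; 0; 0; 0; 1; 1; (- 1); 0; 0; 1; 0; (- 1); 0; 1; 0; 1; (- 1); (- 1); 0; 0; 0; 1]); last by vm_compute.
  rewrite /= !big_cons big_nil /=. lia.
case/orP => [/eqP -> | ].
  rewrite (_ : hrow (v10, v16).1 (v10, v16).2 = [:: 1; 1; (- 1); 0; (- 1); 0; 1; 0; 0; 0; 1; 0; (- 1); (- 1); 0; 0; 0; 0; 0; 0; 0; 0; 1; 0; 0; 0; 0; (- 1); 0; 0; (- 1); 0; 1; 0; (- 1); 0; 0; 0; 0; 0; 0; 0; 0; 1; 0; (- 1); 0; 0; 0; 0; 1; 0; 0; (- 1); 0; (- 1); 0; (- 1); 0; 0; 1; 0; 1; 0; 0]); last by vm_compute.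
  rewrite /= !big_cons big_nil /=. lia.
case/orP => [/eqP -> | ].
  rewrite (_ : hrow (v11, v17).1 (v11, v17).2 = [:: 0; 0; 0; 0; 1; 0; (- 1); 0; 0; 0; (- 1); 0; 0; 1; 0; 1; 0; 0; 0; 0; 0; 0; (- 1); 0; 0; (- 1); (- 1); 0; 0; 0; 1; 1; 1; 0; 0; 1; 1; 1; 0; 0; 0; 0; 0; 1; 0; 0; 0; 0; 0; 0; 0; 0; 0; 0; 0; 0; 0; 1; 0; 0; (- 1); 1; 1; 0; 0]); last by vm_compute.
  rewrite /= !big_cons big_nil /=. lia.
case/orP => [/eqP -> | ].
  rewrite (_ : hrow (v12, v13).1 (v12, v13).2 = [:: 0; 1; 0; 1; 0; (- 1); 1; 1; 0; 0; 0; 0; 0; 0; (- 1); (- 1); 0; (- 1); 0; 0; 0; 0; 0; 0; 0; 0; 1; (- 1); 0; 0; 1; (- 1); 0; 0; 0; (- 1); 1; 0; 0; 0; (- 1); 1; 1; 0; 0; 0; 0; (- 1); 0; 0; 0; 0; 1; 0; 0; (- 1); 0; 1; (- 1); 0; 0; 0; 0; 1; (- 1)]); last by vm_compute.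
  rewrite /= !big_cons big_nil /=. lia.
case/orP => [/eqP -> | ].
  rewrite (_ : hrow (v12, v14).1 (v12, v14).2 = [:: 1; (- 1); 0; 0; 1; 0; (- 1); 0; 0; 1; 1; 0; (- 1); 0; 0; 0; 0; 0; 1; 1; (- 1); (- 1); (- 1); 0; 0; 0; 0; 0; (- 1); 0; 0; 0; (- 1); 0; 1; 0; (- 1); 1; (- 1); 0; 1; 0; 0; 1; 0; 1; 0; 1; 0; 0; (- 1); (- 1); 0; 0; 0; 0; (- 1); 0; 0; 1; 0; 0; (- 1); 0; 0]); last by vm_compute.
  rewrite /= !big_cons big_nil /=. lia.
case/orP => [/eqP -> | ].
  rewrite (_ : hrow (v12, v16).1 (v12, v16).2 = [:: (- 1); 0; 0; 0; 0; 0; 0; 0; (- 1); 0; (- 1); 0; 0; 1; 1; 0; (- 1); 0; 0; 0; 1; 0; 0; 1; 1; 0; (- 1); 0; 0; (- 1); 0; 1; 0; 0; 0; 0; 0; (- 1); 1; (- 1); 0; (- 1); (- 1); 0; 1; 0; 0; 0; 1; 0; 0; 1; (- 1); 1; (- 1); 0; 0; 0; 0; 0; 0; (- 1); 0; 0; 0]); last by vm_compute.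
  rewrite /= !big_cons big_nil /=. lia.
case/orP => [/eqP -> | ].
  rewrite (_ : hrow (v13, v15).1 (v13, v15).2 = [:: 0; 0; 0; 0; 1; (- 1); 0; 0; (- 1); 1; (- 1); 1; 1; (- 1); 0; 0; 0; (- 1); (- 1); 1; 0; 1; 0; 0; (- 1); 1; 0; 0; (- 1); 0; 1; 0; 1; 0; 0; (- 1); 1; (- 1); 0; 1; 0; 0; 0; 0; 0; 1; 1; 0; 0; 0; 0; 0; 0; 0; 0; (- 1); (- 1); 0; (- 1); 0; (- 1); 0; 0; 0; 0]); last by vm_compute.
  rewrite /= !big_cons big_nil /=. lia.
case/orP => [/eqP -> | ].
  rewrite (_ : hrow (v13, v17).1 (v13, v17).2 = [:: (- 1); 0; 1; 0; 0; 0; 1; 0; 0; 0; 1; (- 1); 0; 0; (- 1); (- 1); (- 1); 0; 0; 0; (- 1); 0; 1; 1; 0; 0; 0; 0; 1; 1; 0; (- 1); (- 1); 1; 0; 0; 0; 0; (- 1); 0; 0; 0; 0; (- 1); 1; 0; 0; (- 1); 1; (- 1); (- 1); 0; 0; 1; 1; 0; 0; 0; 0; (- 1); 1; 0; (- 1); 0; (- 1)]); last by vm_compute.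
  rewrite /= !big_cons big_nil /=. lia.
case/orP => [/eqP -> | ].
  rewrite (_ : hrow (v14, v15).1 (v14, v15).2 = [:: 0; (- 1); (- 1); 0; 0; 0; (- 1); (- 1); 0; 0; 0; 0; (- 1); 1; 0; 1; 0; 0; 0; 0; (- 1); 0; 0; 0; 0; (- 1); (- 1); (- 1); 0; (- 1); 0; 1; 0; 1; 1; 0; 0; 1; 0; 0; 0; 1; 0; 1; (- 1); 0; 0; 0; 0; (- 1); 0; 0; 0; (- 1); (- 1); 0; 0; 1; 0; 1; 0; 0; (- 1); 1; (- 1)]); last by vm_compute.
  rewrite /= !big_cons big_nil /=. lia.
case/orP => [/eqP -> | ].
  rewrite (_ : hrow (v14, v16).1 (v14, v16).2 = [:: 0; 0; 0; (- 1); 0; (- 1); 0; 0; 0; 1; 0; (- 1); 0; 0; (- 1); (- 1); 1; (- 1); 1; 0; 0; (- 1); 0; (- 1); (- 1); 1; 0; 1; 0; 1; 0; (- 1); 0; (- 1); 0; (- 1); 0; 0; 0; 0; 1; 0; 0; 0; 0; 0; (- 1); 1; 0; 0; (- 1); 0; 0; 0; 0; 1; 0; 0; 1; 0; (- 1); 0; 0; 0; 1]); last by vm_compute.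
  rewrite /= !big_cons big_nil /=. lia.
case/orP => [/eqP -> | ].
  rewrite (_ : hrow (v15, v17).1 (v15, v17).2 = [:: 1; (- 1); (- 1); 1; 0; (- 1); 0; 0; 0; 0; 0; 0; 0; 0; 1; 0; 1; 0; (- 1); 1; 0; 0; 0; (- 1); (- 1); 0; 0; (- 1); 0; (- 1); 0; 0; 0; 0; 1; 0; 0; 0; 0; 0; (- 1); 1; (- 1); 0; (- 1); 0; 1; 1; (- 1); 0; 1; (- 1); 1; (- 1); 0; (- 1); 0; 0; (- 1); 0; 0; 0; 0; 1; 0]); last by vm_compute.
  rewrite /= !big_cons big_nil /=. lia.
move/eqP ->.
  rewrite (_ : hrow (v16, v17).1 (v16, v17).2 = [:: 0; 1; 0; (- 1); (- 1); 0; 0; (- 1); (- 1); 1; 0; 0; (- 1); 0; 0; 0; 0; (- 1); 0; (- 1); 1; (- 1); 0; 0; 0; 1; 0; 0; (- 1); 0; (- 1); 0; 0; (- 1); (- 1); (- 1); (- 1); 0; 0; (- 1); 0; (- 1); 0; 0; 0; (- 1); (- 1); 0; 0; 1; 0; 1; (- 1); 0; (- 1); 0; (- 1); (- 1); 1; 1; 0; (- 1); 0; (- 1); 1]); last by vm_compute.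
  rewrite /= !big_cons big_nil /=. lia.
Qed.


Lemma boxrel_sym (T1 T2 : eqType) (e1 : rel T1) (e2 : rel T2) :
  (forall a b, e1 a b = e1 b a) -> (forall a b, e2 a b = e2 b a) ->
  forall x y, boxrel e1 e2 x y = boxrel e1 e2 y x.
Proof. by move=> s1 s2 x y; rewrite /boxrel s1 s2 (eq_sym x.1) (eq_sym x.2). Qed.

Lemma boxrel_irr (T1 T2 : eqType) (e1 : rel T1) (e2 : rel T2) :
  (forall a, e1 a a = false) -> (forall a, e2 a a = false) ->
  forall x, boxrel e1 e2 x x = false.
Proof. by move=> i1 i2 x; rewrite /boxrel i1 i2 !andbF. Qed.

Lemma Kn_sym n a b : Kn n a b = Kn n b a.
Proof. by rewrite /Kn eq_sym. Qed.

Lemma Kn_irr n a : Kn n a a = false.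
Proof. by rewrite /Kn eqxx. Qed.

Lemma E0_sym x y : E0 x y = E0 y x.
Proof. by apply: boxrel_sym; [apply: boxrel_sym|]; apply: Kn_sym. Qed.

Lemma E0_irr x : E0 x x = false.
Proof. by apply: boxrel_irr; [apply: boxrel_irr|]; apply: Kn_irr. Qed.

Lemma code_inj : injective code.
Proof.
move=> [[[a Ha] [b Hb]] [c Hc]] [[[a' Ha'] [b' Hb']] [c' Hc']]; rewrite /code /= => H.
have e1 : a = a' by lia.
have e2 : b = b' by lia.
have e3 : c = c' by lia.
by congr ((_, _), _); apply: val_inj.
Qed.

Lemma vsum (F : V -> int) : \sum_(y <- vlist) F y = \sum_(y : V) F y.
Proof. by rewrite big_uniq ?vlist_uniq //; apply: eq_bigl => y; rewrite mem_vlist. Qed.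

Lemma vsumP (P : pred V) (F : V -> int) : \sum_(y <- vlist | P y) F y = \sum_(y : V | P y) F y.
Proof. by rewrite big_mkcond vsum -big_mkcond. Qed.

Lemma sum_hrow_anti (cf : seq int) cs x y :
  \sum_(q <- zip cf [seq hflow c y x | c <- cs]) q.1 * q.2 =
  - \sum_(q <- zip cf [seq hflow c x y | c <- cs]) q.1 * q.2.
Proof.
elim: cs cf => [|c cs IH] [|a cf] /=; rewrite ?big_nil ?oppr0 //.
by rewrite !big_cons /= IH opprD /hflow -mulrN opprB.
Qed.

Lemma mem_elist x y : E0 x y -> (code x < code y)%N -> (x, y) \in elist.
Proof.
move=> hxy hc; apply: (@allpairs_f_dep _ (fun _ => V) _ (fun x y => (x, y)) vlist (fun x => [seq y <- vlist | E0 x y && (code x < code y)%N])).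
  exact: mem_vlist.
by rewrite mem_filter hxy hc mem_vlist.
Qed.

Lemma concrete_all (G : V -> V -> int) :
  (forall x y, E0 x y -> G y x = - G x y) ->
  (forall x, \sum_(y <- vlist | E0 x y) G x y = 0) ->
  (2 %| \sum_(p <- elist) G p.1 p.2)%Z ->
  exists cf : seq int, forall x y, E0 x y -> G x y = \sum_(q <- zip cf (hrow x y)) q.1 * q.2.
Proof.
move=> Ganti Gcons Gpar; have [cf hcf] := concrete Ganti Gcons Gpar.
exists cf => x y hxy.
have hne : code x != code y.
  by apply/eqP => /code_inj e; move: hxy; rewrite e E0_irr.
case: (ltngtP (code x) (code y)) hne => // hlt _.
  exact: (hcf (x, y) (mem_elist hxy hlt)).
have hyx : E0 y x by rewrite E0_sym.
rewrite -[LHS]opprK -(Ganti _ _ hxy) (hcf (y, x) (mem_elist hyx hlt)).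
by rewrite /hrow sum_hrow_anti opprK.
Qed.

Lemma mem_zip2 (A B : eqType) (a : seq A) (b : seq B) p : p \in zip a b -> p.2 \in b.
Proof.
elim: a b => [|x a IH] [|y b]; try by [].
rewrite [zip _ _]/= in_cons => /orP[/eqP->|/IH h]; by rewrite /= ?eqxx ?h ?orbT.
Qed.

Lemma zipsum (A B : eqType) (F : A -> B) (K : B -> int) (h : A -> int) cf cs :
  (forall c, c \in cs -> K (F c) = h c) ->
  \sum_(q <- zip cf (map F cs)) K q.2 *~ q.1 = \sum_(q <- zip cf (map h cs)) q.1 * q.2.
Proof.
elim: cs cf => [|c cs IH] [|a cf] hc //=; rewrite ?big_nil // !big_cons /=.
rewrite hc ?inE ?eqxx // IH; first by rewrite mulrzz mulrC.
by move=> d dcs; apply: hc; rewrite inE dcs orbT.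
Qed.


Theorem corollary10p6 (gT : finGroupType) (S : {set gT}) :
  abelian [set: gT] ->
  (1 \notin S)%g ->
  (forall s, s \in S -> s^-1 \in S)%g ->
  graph_iso (cay_adj S) (boxrel (boxrel (Kn 3) (Kn 3)) (Kn 2)) ->
  forall f : flowfun gT, in_H S f <-> in_E S f.
Proof.
move=> _ h1 hinv [phi [phib phiE]] f.
have card18 : #|gT| = 18%N by rewrite (bij_eq_card phib) !card_prod !card_ord.
split; first exact: HsubE.
move=> [[f1 f2 f3] fe].
have phib' := phib; case: phib' => psi phiK psiK.
pose G (x y : V) := f (psi x, (psi x)^-1 * psi y)%g.
have adjE' : forall v w, E0 (phi v) (phi w) = cay_adj S v w := fun v w => esym (phiE v w).
have adjE : forall x y, E0 x y = cay_adj S (psi x) (psi y).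
  by move=> x y; rewrite -adjE' !psiK.
have Fanti : forall v w, cay_adj S v w -> f (w, w^-1 * v)%g = - f (v, v^-1 * w)%g.
  by move=> v w hvw; rewrite [f (v, _)]f2 // mulKVg invMg invgK opprK.
have Ganti : forall x y, E0 x y -> G y x = - G x y.
  by move=> x y; rewrite adjE => /Fanti.
have Gcons : forall x, \sum_(y <- vlist | E0 x y) G x y = 0.
  move=> x; rewrite vsumP (reindex phi) /=; last exact: onW_bij.
  apply: etrans (f3 (psi x)).
  transitivity (\sum_(s in S | predT (psi x * s)%g) f (psi x, s)); last first.
    by apply: eq_bigl => s; rewrite andbT.
  rewrite pairform; apply: eq_big => w; first by rewrite andbT adjE phiK.
  by move=> _; rewrite /G phiK.
have ri : injective (fun v : gT => nat_of_ord (enum_rank v)).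
  by move=> x y /val_inj/enum_rank_inj.
have [B HB] := @par_change gT (cay_adj S) (fun v w => f (v, v^-1 * w)%g)
  (fun v => nat_of_ord (enum_rank v)) (fun v => code (phi v)) (cay_sym hinv) (cay_irr h1)
  Fanti ri (inj_comp code_inj (can_inj phiK)).
have Hefs : edge_flow_sum S f = \sum_v \sum_(w | cay_adj S v w &&
    (nat_of_ord (enum_rank v) < nat_of_ord (enum_rank w))%N) f (v, v^-1 * w)%g.
  rewrite /edge_flow_sum; apply: eq_bigr => v _.
  exact: (@pairform _ S v (fun w => (nat_of_ord (enum_rank v) < nat_of_ord (enum_rank w))%N) (fun s => f (v, s))).
have Gpar : (2 %| \sum_(p <- elist) G p.1 p.2)%Z.
  rewrite /elist big_allpairs_dep vsum.
  rewrite (eq_bigr (fun x => \sum_(y : V | E0 x y && (code x < code y)%N) G x y)); last first.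
    by move=> x _; rewrite big_filter vsumP.
  rewrite (reindex phi) /=; last exact: onW_bij.
  rewrite (eq_bigr (fun v => \sum_(w | cay_adj S v w && (code (phi v) < code (phi w))%N)
     f (v, v^-1 * w)%g)); last first.
    move=> v _; rewrite (reindex phi) /=; last exact: onW_bij.
    by apply: eq_big => w; [rewrite adjE' | move=> _; rewrite /G !phiK].
  move: fe; rewrite Hefs HB => /dvdzP[a Ha]; apply/dvdzP; exists (a - B).
  move/(congr1 (fun t => t - 2 * B)): Ha; rewrite addrK => ->; lia.
have [cf hcf] := concrete_all Ganti Gcons Gpar.
have hamc : forall c, c \in hcs -> ham_cycle S (map psi c).
  move=> c /(allP hcs_ok) /and3P[uc /eqP sc cc]; split.
  - by rewrite map_inj_uniq //; exact: can_inj psiK.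
  - by rewrite size_map sc card18.
  - rewrite cycle_map; apply: (sub_cycle _ cc) => x y h; by rewrite /= -adjE.
exists (zip cf (map (map psi) hcs)); split.
  by move=> p /mem_zip2 /mapP [c cin ->]; exact: hamc.
apply/ffunP => -[v s]; rewrite sum_ffunE.
rewrite (eq_bigr (fun q => cycle_flow S q.2 (v, s) *~ q.1)); last by move=> q _; rewrite ffunMzE.
case sS: (s \in S); last first.
  rewrite f1 ?sS // big1 // => q _; by rewrite ffunE /= sS mul0rz.
have hvs : E0 (phi v) (phi (v * s)%g) by rewrite adjE' /cay_adj mulKg.
have -> : f (v, s) = G (phi v) (phi (v * s)%g) by rewrite /G !phiK mulKg.
rewrite hcf // /hrow; symmetry.
apply: (zipsum (F := map psi) (K := fun c => cycle_flow S c (v, s))) => c cin.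
have hc := hamc c cin; have mc := ham_mem hc.
have uc0 : uniq c by move: (allP hcs_ok c cin) => /and3P[].
have Nx : forall w, next (map psi c) w = psi (next c (phi w)).
  by move=> w; rewrite -{1}[w]phiK next_map //; exact: can_inj psiK.
have Pq : forall z t, (psi z == t) = (z == phi t).
  by move=> z t; rewrite -(inj_eq (can_inj phiK)) psiK.
by rewrite ffunE /= sS !mc /= !Nx !Pq /hflow.
Qed.
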